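(* Let $G$ be a full Frobenius group of finite Morley rank with proper full Frobenius complement $B$. Then: (1) $B$ is infinite; (2) if $G$ is connected, then $B$ is connected; (3) if $N$ is a non-trivial definable normal subgroup of $G$, then $G=NB$.
   Context: A subgroup $B$ of a group $G$ is malnormal if $B\cap B^g=\{1\}$ for all $g\in G\setminus B$. A full Frobenius complement of a group $G$ of finite Morley rank is a definable malnormal subgroup of $G$ whose conjugates $B^g$ ($g\in G$) cover $G$. A group $G$ of finite Morley rank is a full Frobenius group if it has a proper full Frobenius complement $B$; the conjugates of $B$ are then called the Borel subgroups of $G$. *)

(* Defs.v *)
From Stdlib Require Import List.
From mathcomp Require Import all_boot.

Set Implicit Arguments.
Unset Strict Implicit.
Unset Printing Implicit Defensive.

(* Groups of finite Morley rank, presented as ranked groups                 *)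
(* (Borovik--Poizat ranked universe, as in Borovik--Nesin, Groups of       *)
(* finite Morley rank'' which Poizat showed equivalent to finite Morley     *)
(* rank).  The definable sets of the (possibly expanded) structure on G are *)
(* given as predicates on the powers G^n = ('I_n -> G), with parameters.    *)

Definition tjoin (T : Type) (n m : nat) (x : 'I_n -> T) (y : 'I_m -> T)
  : 'I_(n + m) -> T :=
  fun i => match fintype.split i with inl j => x j | inr k => y k end.

Definition fibre (T : Type) (n m : nat) (A : ('I_(n + m) -> T) -> Prop)
  (x : 'I_n -> T) : ('I_m -> T) -> Prop := fun y => A (tjoin x y).

Definition finite_set (U : Type) (P : U -> Prop) : Prop :=
  exists s : list U, forall y, P y -> In y s.

Record fMR_group : Type := FMRGroup {
  carrier :> Type;
  gmul : carrier -> carrier -> carrier;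
  gone : carrier;
  ginv : carrier -> carrier;
  gmulA : forall x y z, gmul x (gmul y z) = gmul (gmul x y) z;
  gmul1 : forall x, gmul gone x = x;
  gmulV : forall x, gmul (ginv x) x = gone;
  Def : forall n, (('I_n -> carrier) -> Prop) -> Prop;
  Def_ext : forall n (A A' : ('I_n -> carrier) -> Prop),
      Def A -> (forall x, A x <-> A' x) -> Def A';
  Def_true : forall n, Def (fun _ : 'I_n -> carrier => True);
  Def_compl : forall n (A : ('I_n -> carrier) -> Prop),
      Def A -> Def (fun x => ~ A x);
  Def_inter : forall n (A A' : ('I_n -> carrier) -> Prop),
      Def A -> Def A' -> Def (fun x => A x /\ A' x);
  Def_eq : forall n (i j : 'I_n), Def (fun x : 'I_n -> carrier => x i = x j);
  Def_const : forall n (i : 'I_n) (c : carrier),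
      Def (fun x : 'I_n -> carrier => x i = c);
  Def_mul : forall n (i j k : 'I_n),
      Def (fun x : 'I_n -> carrier => gmul (x i) (x j) = x k);
  (* substitution of variables: permutations, diagonals, dummy variables *)
  Def_sub : forall k n (s : 'I_k -> 'I_n) (A : ('I_k -> carrier) -> Prop),
      Def A -> Def (fun x : 'I_n -> carrier => A (fun i => x (s i)));
  Def_proj : forall n m (A : ('I_(n + m) -> carrier) -> Prop),
      Def A -> Def (fun x : 'I_n -> carrier => exists y, fibre A x y);
  (* the rank (meaningful on nonempty definable sets) *)
  rk : forall n, (('I_n -> carrier) -> Prop) -> nat;
  rk_def : forall n (A : ('I_n -> carrier) -> Prop), Def A ->
      (exists x, A x) -> forall m,
      (m.+1 <= rk A) <->
      (exists Bf : nat -> ('I_n -> carrier) -> Prop,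
          (forall k, Def (Bf k) /\ (exists x, Bf k x) /\
                     (forall x, Bf k x -> A x) /\ m <= rk (Bf k)) /\
          (forall k l x, k <> l -> Bf k x -> Bf l x -> False));
  rk_definable : forall n m (A : ('I_(n + m) -> carrier) -> Prop) (k : nat),
      Def A ->
      Def (fun x : 'I_n -> carrier =>
             (exists y, fibre A x y) /\ rk (fibre A x) = k);
  rk_add : forall n m (A : ('I_(n + m) -> carrier) -> Prop) (k : nat),
      Def A -> (exists z, A z) ->
      (forall x, (exists y, fibre A x y) -> rk (fibre A x) = k) ->
      rk A = rk (fun x : 'I_n -> carrier => exists y, fibre A x y) + k;
  rk_elim : forall n m (A : ('I_(n + m) -> carrier) -> Prop),
      Def A -> exists N : nat, forall x : 'I_n -> carrier,
        finite_set (fibre A x) ->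
        exists s : list ('I_m -> carrier),
          length s <= N /\ forall y, fibre A x y -> In y s
}.

Section GroupNotions.
Variable G : fMR_group.
Implicit Types (H K : G -> Prop) (g x : G).

Local Notation "x * y" := (gmul x y).
Local Notation "1" := (gone G).
Local Notation "x ^-1" := (ginv x).

Definition definable H : Prop := Def (fun x : 'I_1 -> G => H (x ord0)).

Definition is_subgroup H : Prop :=
  H 1 /\ (forall x y, H x -> H y -> H (x * y)) /\ (forall x, H x -> H (x^-1)).

Definition definable_subgroup H : Prop := is_subgroup H /\ definable H.

(* the conjugate H^g = g^-1 H g *)
Definition conj_set H g : G -> Prop := fun x => H (g * x * g^-1).

Definition malnormal H : Prop :=
  forall g, ~ H g -> forall x, H x -> conj_set H g x -> x = 1.

Definition full_frobenius_complement B : Prop :=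
  definable_subgroup B /\ malnormal B /\ (forall x, exists g, conj_set B g x).

Definition proper_subset H : Prop := exists x, ~ H x.

Definition full_frobenius_with B : Prop :=
  full_frobenius_complement B /\ proper_subset B.

Definition infinite_set H : Prop := ~ finite_set H.

Definition finite_index K H : Prop :=
  exists s : list G, forall x, H x -> exists c, In c s /\ K (x * c^-1).

Definition connected_subgroup H : Prop :=
  forall K, definable_subgroup K -> (forall x, K x -> H x) ->
    finite_index K H -> forall x, H x -> K x.

Definition connected_group : Prop := connected_subgroup (fun _ => True).

Definition normal_subgroup N : Prop :=
  is_subgroup N /\ forall g x, N x -> N (g^-1 * x * g).

Definition nontrivial H : Prop := exists x, H x /\ x <> 1.

Definition product_is_whole N B : Prop :=
  forall x, exists n b, N n /\ B b /\ x = n * b.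

End GroupNotions.

(* Main.v *)
Require Import Defs.
From Stdlib Require Import List Classical ClassicalEpsilon FunctionalExtensionality PropExtensionality FinFun.
From mathcomp Require Import all_boot zify.

Set Implicit Arguments.
Unset Strict Implicit.
Unset Printing Implicit Defensive.


Lemma pred_ext (T : Type) (A A' : T -> Prop) : (forall x, A x <-> A' x) -> A = A'.
Proof. move=> h; apply: functional_extensionality => x; apply: propositional_extensionality; exact: h. Qed.

Section Basics.
Variable G : fMR_group.
Local Notation "x ** y" := (gmul x y) (at level 40, left associativity).
Local Notation one := (gone G).
Local Notation inv := (@ginv G).

Lemma mulgA' (x y z : G) : x ** (y ** z) = x ** y ** z. Proof. exact: gmulA. Qed.
Lemma mul1g' (x : G) : one ** x = x. Proof. exact: gmul1. Qed.
Lemma mulVg' (x : G) : inv x ** x = one. Proof. exact: gmulV. Qed.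

Lemma mulgV' (x : G) : x ** inv x = one.
Proof.
have e : (x ** inv x) ** (x ** inv x) = x ** inv x.
  by rewrite -mulgA' (mulgA' (inv x)) mulVg' mul1g'.
rewrite -[LHS]mul1g' -(mulVg' (x ** inv x)) -mulgA' e //.
Qed.

Lemma mulg1' (x : G) : x ** one = x.
Proof. by rewrite -(mulVg' x) mulgA' mulgV' mul1g'. Qed.

Lemma mulKg' (x y : G) : inv x ** (x ** y) = y.
Proof. by rewrite mulgA' mulVg' mul1g'. Qed.
Lemma mulKVg' (x y : G) : x ** (inv x ** y) = y.
Proof. by rewrite mulgA' mulgV' mul1g'. Qed.
Lemma mulgK' (x y : G) : y ** x ** inv x = y.
Proof. by rewrite -mulgA' mulgV' mulg1'. Qed.
Lemma mulgKV' (x y : G) : y ** inv x ** x = y.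
Proof. by rewrite -mulgA' mulVg' mulg1'. Qed.

Lemma mulg_injl (x y z : G) : x ** y = x ** z -> y = z.
Proof. by move=> e; rewrite -(mulKg' x y) e mulKg'. Qed.
Lemma mulg_injr (x y z : G) : y ** x = z ** x -> y = z.
Proof. by move=> e; rewrite -(mulgK' x y) e mulgK'. Qed.

Lemma invgK' (x : G) : inv (inv x) = x.
Proof. by apply: (@mulg_injl (inv x)); rewrite mulgV' mulVg'. Qed.

Lemma invMg' (x y : G) : inv (x ** y) = inv y ** inv x.
Proof.
apply: (@mulg_injl (x ** y)); rewrite mulgV' -mulgA' (mulgA' y) mulgV' mul1g' mulgV' //.
Qed.

Lemma inv1' : inv one = one.
Proof. by rewrite -[LHS]mul1g' mulgV'. Qed.

Lemma eq_mulgV1 (x y : G) : x ** inv y = one <-> x = y.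
Proof.
split=> [e|->]; last exact: mulgV'.
by rewrite -(mulgKV' y x) e mul1g'.
Qed.

Lemma mulg_eq1 (x y : G) : x ** y = one -> y = inv x.
Proof. by move=> e; rewrite -(mulKg' x y) e mulg1'. Qed.

End Basics.

Definition up {n} (i : 'I_n) : 'I_(n + 1) := lshift 1 i.
Definition lst n : 'I_(n + 1) := rshift n ord0.

Lemma split_up n (i : 'I_n) : fintype.split (up i) = inl i.
Proof. exact: (unsplitK (inl _ i)). Qed.
Lemma split_lst n : fintype.split (lst n) = inr ord0.
Proof. exact: (unsplitK (inr _ ord0)). Qed.

Section Tuples.
Variable T : Type.
Definition ext {n} (x : 'I_n -> T) (y : T) : 'I_(n + 1) -> T :=
  tjoin x (fun _ => y).
Lemma ext_up n (x : 'I_n -> T) y i : ext x y (up i) = x i.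
Proof. by rewrite /ext /tjoin split_up. Qed.
Lemma ext_lst n (x : 'I_n -> T) y : ext x y (lst n) = y.
Proof. by rewrite /ext /tjoin split_lst. Qed.
Lemma tjoin1 n (x : 'I_n -> T) (y : 'I_1 -> T) : tjoin x y = ext x (y ord0).
Proof.
apply: functional_extensionality => i; rewrite /ext /tjoin.
by case: (fintype.split i) => // k; rewrite (ord1 k).
Qed.
Lemma tup1 (x : 'I_1 -> T) : x = (fun _ => x ord0).
Proof. by apply: functional_extensionality => i; rewrite (ord1 i). Qed.
End Tuples.

Section Defin.
Variable G : fMR_group.
Local Notation "x ** y" := (gmul x y) (at level 40, left associativity).
Local Notation one := (gone G).
Local Notation inv := (@ginv G).
Local Notation Df := (@Def G).

Lemma D_ext n (A A' : ('I_n -> G) -> Prop) : Df A -> (forall x, A x <-> A' x) -> Df A'.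
Proof. exact: Def_ext. Qed.

Lemma D_ex n (A : ('I_(n + 1) -> G) -> Prop) :
  Df A -> Df (fun x : 'I_n -> G => exists y, A (ext x y)).
Proof.
move=> h; apply: D_ext (Def_proj h) _ => x; split.
  by case=> y; rewrite /fibre tjoin1 => ?; exists (y ord0).
by case=> y ?; exists (fun _ => y); rewrite /fibre tjoin1.
Qed.

Lemma D_and n (A A' : ('I_n -> G) -> Prop) : Df A -> Df A' -> Df (fun x => A x /\ A' x).
Proof. exact: Def_inter. Qed.
Lemma D_not n (A : ('I_n -> G) -> Prop) : Df A -> Df (fun x => ~ A x).
Proof. exact: Def_compl. Qed.
Lemma D_or n (A A' : ('I_n -> G) -> Prop) : Df A -> Df A' -> Df (fun x => A x \/ A' x).
Proof.
move=> h h'; apply: D_ext (D_not (D_and (D_not h) (D_not h'))) _ => x.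
by split; [apply: NNPP; tauto | tauto].
Qed.
Lemma D_imp n (A A' : ('I_n -> G) -> Prop) : Df A -> Df A' -> Df (fun x => A x -> A' x).
Proof.
move=> h h'; apply: D_ext (D_or (D_not h) h') _ => x.
by split; [tauto | move=> i; case: (classic (A x)); tauto].
Qed.
Lemma D_true n : Df (fun _ : 'I_n -> G => True).
Proof. exact: Def_true. Qed.
Lemma D_false n : Df (fun _ : 'I_n -> G => False).
Proof. by apply: D_ext (D_not (@D_true n)) _ => x; tauto. Qed.
Lemma D_cst n (P : Prop) : Df (fun _ : 'I_n -> G => P).
Proof.
case: (classic P) => p; first by apply: D_ext (@D_true n) _; tauto.
by apply: D_ext (@D_false n) _; tauto.
Qed.
Lemma D_all n (A : ('I_(n + 1) -> G) -> Prop) :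
  Df A -> Df (fun x : 'I_n -> G => forall y, A (ext x y)).
Proof.
move=> h; apply: D_ext (D_not (D_ex (D_not h))) _ => x; split.
  by move=> nh y; apply: NNPP => ny; apply: nh; exists y.
by move=> a [y]; apply.
Qed.

Definition sext {n k} (s : 'I_n -> 'I_k) (j : 'I_k) : 'I_(n + 1) -> 'I_k :=
  fun i => match fintype.split i with inl a => s a | inr _ => j end.

Lemma sext_up n k (s : 'I_n -> 'I_k) j i : sext s j (up i) = s i.
Proof. by rewrite /sext split_up. Qed.
Lemma sext_lst n k (s : 'I_n -> 'I_k) j : sext s j (lst n) = j.
Proof. by rewrite /sext split_lst. Qed.

Definition tdef n (t : ('I_n -> G) -> G) :=
  Df (fun z : 'I_(n + 1) -> G => t (fun i => z (up i)) = z (lst n)).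

Lemma tdef_at n (t : ('I_n -> G) -> G) : tdef t ->
  forall k (s : 'I_n -> 'I_k) (j : 'I_k),
  Df (fun w : 'I_k -> G => t (fun i => w (s i)) = w j).
Proof.
move=> h k s j; apply: D_ext (Def_sub (sext s j) h) _ => w.
have -> : (fun i => w (sext s j (up i))) = (fun i => w (s i)).
  by apply: functional_extensionality => i; rewrite sext_up.
by rewrite sext_lst.
Qed.

Lemma D_at n (P : G -> Prop) (i : 'I_n) : definable P -> Df (fun x => P (x i)).
Proof. move=> h; exact: (Def_sub (fun _ : 'I_1 => i) h). Qed.

Lemma tdef_var n (i : 'I_n) : tdef (fun x => x i).
Proof. exact: Def_eq. Qed.

Lemma tdef_const n (c : G) : tdef (fun _ : 'I_n -> G => c).
Proof. by apply: D_ext (Def_const (lst n) c) _ => z; split=> ->. Qed.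

Lemma ext3 n (z : 'I_n -> G) u v :
  (fun i => ext (ext (ext z u) v) v (up (up (up i)))) = z.
Proof. by apply: functional_extensionality => i; rewrite !ext_up. Qed.

Lemma tdef_mul n (t1 t2 : ('I_n -> G) -> G) : tdef t1 -> tdef t2 ->
  tdef (fun x => t1 x ** t2 x).
Proof.
move=> h1 h2.
pose xw (w : 'I_(n + 1 + 1 + 1) -> G) := fun i => w (up (up (up i))).
pose zl (w : 'I_(n + 1 + 1 + 1) -> G) := w (up (up (lst n))).
pose uw (w : 'I_(n + 1 + 1 + 1) -> G) := w (up (lst (n + 1))).
pose vw (w : 'I_(n + 1 + 1 + 1) -> G) := w (lst (n + 1 + 1)).
have D : Df (fun w => t1 (xw w) = uw w /\ t2 (xw w) = vw w /\ uw w ** vw w = zl w).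
  apply: D_and; first exact: (tdef_at h1).
  apply: D_and; first exact: (tdef_at h2).
  exact: Def_mul.
apply: D_ext (D_ex (D_ex D)) _ => z.
rewrite /xw /zl /uw /vw.
have E : forall u v, (fun i => ext (ext z u) v (up (up (up i)))) = (fun i => z (up i)).
  by move=> u v; apply: functional_extensionality => i; rewrite !ext_up.
split.
  case=> u [v]; rewrite E !ext_up !ext_lst => -[-> [->]] //.
move=> e; exists (t1 (fun i => z (up i))); exists (t2 (fun i => z (up i))).
by rewrite E !ext_up !ext_lst.
Qed.

Lemma tdef_inv n (t : ('I_n -> G) -> G) : tdef t -> tdef (fun x => inv (t x)).
Proof.
move=> h.
pose xw (w : 'I_(n + 1 + 1 + 1) -> G) := fun i => w (up (up (up i))).
pose zl (w : 'I_(n + 1 + 1 + 1) -> G) := w (up (up (lst n))).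
pose uw (w : 'I_(n + 1 + 1 + 1) -> G) := w (up (lst (n + 1))).
pose vw (w : 'I_(n + 1 + 1 + 1) -> G) := w (lst (n + 1 + 1)).
have D : Df (fun w => t (xw w) = uw w /\ vw w = one /\ uw w ** zl w = vw w).
  apply: D_and; first exact: (tdef_at h).
  apply: D_and; first exact: Def_const.
  exact: Def_mul.
apply: D_ext (D_ex (D_ex D)) _ => z.
rewrite /xw /zl /uw /vw.
have E : forall u v, (fun i => ext (ext z u) v (up (up (up i)))) = (fun i => z (up i)).
  by move=> u v; apply: functional_extensionality => i; rewrite !ext_up.
split.
  case=> u [v]; rewrite E !ext_up !ext_lst => -[-> [-> e]].
  by rewrite (mulg_eq1 e).
move=> e; exists (t (fun i => z (up i))); exists one.
by rewrite E !ext_up !ext_lst -e mulgV'.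
Qed.

Lemma tdef_comp n (P : G -> Prop) (t : ('I_n -> G) -> G) :
  definable P -> tdef t -> Df (fun x => P (t x)).
Proof.
move=> hP ht.
have D : Df (fun z : 'I_(n + 1) -> G => t (fun i => z (up i)) = z (lst n) /\ P (z (lst n))).
  by apply: D_and => //; exact: D_at.
apply: D_ext (D_ex D) _ => x.
have E : forall y, (fun i => ext x y (up i)) = x.
  by move=> y; apply: functional_extensionality => i; rewrite ext_up.
split; first by case=> y; rewrite E ext_lst => -[->].
by move=> p; exists (t x); rewrite E ext_lst.
Qed.

Lemma tdef_eq n (t1 t2 : ('I_n -> G) -> G) : tdef t1 -> tdef t2 ->
  Df (fun x => t1 x = t2 x).
Proof.
move=> h1 h2.
have hP : definable (fun y : G => y = one).
  exact: (Def_const ord0 one).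
apply: D_ext (tdef_comp hP (tdef_mul h1 (tdef_inv h2))) _ => x.
exact: eq_mulgV1.
Qed.

Definition def2 (R : G -> G -> Prop) :=
  Df (fun z : 'I_(1 + 1) -> G => R (z (up ord0)) (z (lst 1))).

Definition sext2 {k} (i j : 'I_k) : 'I_(1 + 1) -> 'I_k :=
  fun a => match fintype.split a with inl _ => i | inr _ => j end.

Lemma D_at2 (R : G -> G -> Prop) k (i j : 'I_k) : def2 R -> Df (fun w => R (w i) (w j)).
Proof.
move=> h; apply: D_ext (Def_sub (sext2 i j) h) _ => w.
by rewrite /sext2 split_up split_lst.
Qed.

Lemma def2_swap R : def2 R -> def2 (fun a b => R b a).
Proof. move=> h; exact: (D_at2 (lst 1) (up ord0) h). Qed.

Lemma def2_proj R : def2 R -> definable (fun x => exists y, R x y).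
Proof.
move=> h; apply: D_ext (D_ex h) _ => x.
split; case=> y; [rewrite ext_up ext_lst | ]; move=> ?; exists y;
  rewrite ?ext_up ?ext_lst //.
Qed.

Lemma def2_proj2 R : def2 R -> definable (fun y => exists x, R x y).
Proof. move=> h; exact: (def2_proj (def2_swap h)). Qed.

Lemma def2_l P : definable P -> def2 (fun a _ => P a).
Proof. move=> h; exact: D_at. Qed.
Lemma def2_r P : definable P -> def2 (fun _ b => P b).
Proof. move=> h; exact: D_at. Qed.

End Defin.

Lemma pigeon (T : Type) (s : list T) (f : nat -> T) :
  (forall k, In (f k) s) -> exists k l, k <> l /\ f k = f l.
Proof.
move=> hs; apply: NNPP => nh.
have inj : Injective f.
  move=> k l e; apply: NNPP => ne; apply: nh; by exists k, l.
have nd := Injective_map_NoDup inj (seq_NoDup (length s).+1 0).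
have inc : incl (List.map f (List.seq 0 (length s).+1)) s.
  by move=> y; rewrite in_map_iff => -[k [<- _]].
have := NoDup_incl_length nd inc; rewrite length_map length_seq.
move/leP; by rewrite ltnn.
Qed.

Lemma avoid_seq (T : Type) (P : T -> Prop) (Rl : T -> T -> Prop) :
  inhabited T ->
  (forall s : list T, exists x, P x /\ forall c, In c s -> Rl x c) ->
  exists f : nat -> T, (forall k, P (f k)) /\ (forall i j, i < j -> Rl (f j) (f i)).
Proof.
move=> inh h.
pose pick (s : list T) := epsilon inh (fun x => P x /\ forall c, In c s -> Rl x c).
have pickP : forall s, P (pick s) /\ forall c, In c s -> Rl (pick s) c.
  by move=> s; exact: (epsilon_spec inh _ (h s)).
pose L := fix L k := match k with 0 => nil | k'.+1 => pick (L k') :: L k' end.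
exists (fun k => pick (L k)); split; first by move=> k; exact: (proj1 (pickP (L k))).
have inL : forall i j, i < j -> In (pick (L i)) (L j).
  move=> i j; elim: j => // j IH; rewrite ltnS leq_eqVlt => /orP [/eqP ->|lt].
    by left.
  by right; apply: IH.
by move=> i j lt; case: (pickP (L j)) => _; apply; apply: inL.
Qed.

Lemma inf_sub (P : nat -> Prop) :
  (forall N, exists k, N <= k /\ P k) ->
  exists s : nat -> nat, (forall i, P (s i)) /\ (forall i j, i <> j -> s i <> s j).
Proof.
move=> h.
have [f [fP fR]] : exists f : nat -> nat, (forall k, P (f k)) /\ (forall i j, i < j -> f i < f j).
  apply: (@avoid_seq nat P (fun x c => c < x) (inhabits 0)) => s.
  have [k [le pk]] := h (fold_right maxn 0 s).+1.
  exists k; split=> // c inc; apply: leq_trans le; rewrite ltnS; clear -inc.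
  elim: s inc => // x s IH /= [->|/IH le]; first exact: leq_maxl.
  apply: leq_trans le _; exact: leq_maxr.
exists f; split=> // i j ne.
case: (ltngtP i j) => [lt|lt|e]; last by case: ne.
  by move=> e; have := fR _ _ lt; rewrite e ltnn.
by move=> e; have := fR _ _ lt; rewrite e ltnn.
Qed.

Lemma min_exists (P : nat -> Prop) : (exists k, P k) -> exists n, P n /\ forall k, P k -> n <= k.
Proof.
case=> k; elim: k {-2}k (leqnn k) => [|k IH] j.
  rewrite leqn0 => /eqP -> p; exists 0; split=> // m _.
move=> le pj; case: (classic (exists i, i < j /\ P i)) => [[i [lt pi]]|no].
  apply: (IH i) => //; rewrite -ltnS; exact: leq_trans lt le.
exists j; split=> // m pm; rewrite leqNgt; apply/negP => lt; apply: no; by exists m.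
Qed.

Section Rank.
Variable G : fMR_group.
Local Notation "x ** y" := (gmul x y) (at level 40, left associativity).
Local Notation one := (gone G).
Local Notation inv := (@ginv G).
Local Notation Df := (@Def G).

Definition nonempty n (A : ('I_n -> G) -> Prop) := exists x, A x.

Lemma rk_mono n (A A' : ('I_n -> G) -> Prop) : Df A -> Df A' ->
  (exists x, A x) -> (forall x, A x -> A' x) -> rk A <= rk A'.
Proof.
move=> hA hA' [x Ax] sub.
case e: (rk A) => [|m] //.
have : m.+1 <= rk A by rewrite e.
move/(rk_def hA (ex_intro _ x Ax)) => [Bf [h1 h2]].
apply/(rk_def hA' (ex_intro _ x (sub x Ax))); exists Bf; split=> // k.
have [d [ne [s r]]] := h1 k; split=> //; split=> //; split=> // y b; exact: sub _ (s _ b).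
Qed.

Lemma rk_union n : forall m (A A' U : ('I_n -> G) -> Prop), Df A -> Df A' -> Df U ->
  (forall x, U x -> A x \/ A' x) -> (exists x, U x) -> m <= rk U ->
  ((exists x, A x) /\ m <= rk A) \/ ((exists x, A' x) /\ m <= rk A').
Proof.
elim=> [|m IH] A A' U hA hA' hU sub [x Ux] le.
  by case: (sub x Ux) => ?; [left|right]; split=> //; exists x.
move: le => /(rk_def hU (ex_intro _ x Ux)) [Bf [h1 h2]].
have key : forall k, ((exists y, Bf k y /\ A y) /\ m <= rk (fun y => Bf k y /\ A y)) \/
                      ((exists y, Bf k y /\ A' y) /\ m <= rk (fun y => Bf k y /\ A' y)).
  move=> k; have [d [ne [s r]]] := h1 k.
  apply: IH r => //; try (apply: D_and => //).
  by move=> y b; case: (sub y (s y b)) => ?; [left|right].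
have fam : forall (C : ('I_n -> G) -> Prop), Df C ->
   (forall N, exists k, N <= k /\ ((exists y, Bf k y /\ C y) /\ m <= rk (fun y => Bf k y /\ C y))) ->
   (exists x, C x) /\ m.+1 <= rk C.
  move=> C hC inf.
  have [s [sP sI]] := inf_sub inf.
  have [[y [_ Cy]] _] := sP 0.
  split; first by exists y.
  apply/(rk_def hC (ex_intro _ y Cy)); exists (fun i y => Bf (s i) y /\ C y); split.
    move=> i; have [ne r] := sP i; split; first by apply: D_and => //; case: (h1 (s i)).
    by split=> //; split=> // z [].
  by move=> k l z ne [b _] [b' _]; exact: (h2 _ _ _ (sI _ _ ne) b b').
case: (classic (forall N, exists k, N <= k /\ ((exists y, Bf k y /\ A y) /\ m <= rk (fun y => Bf k y /\ A y)))) => [inf|fin].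
  by left; apply: fam.
right; apply: fam => // N.
have [N0 hN0] : exists N0, forall k, N0 <= k -> ~ (((exists y, Bf k y /\ A y) /\ m <= rk (fun y => Bf k y /\ A y))).
  apply: NNPP => nh; apply: fin => N1; apply: NNPP => nk; apply: nh; exists N1 => k le pk.
  by apply: nk; exists k.
exists (maxn N N0); split; first exact: leq_maxl.
case: (key (maxn N N0)) => // a; exfalso; apply: (hN0 (maxn N N0)) => //; exact: leq_maxr.
Qed.

Lemma rk_union_le n (A A' U : ('I_n -> G) -> Prop) M : Df A -> Df A' -> Df U ->
  (forall x, U x -> A x \/ A' x) -> (exists x, U x) ->
  ((exists x, A x) -> rk A <= M) -> ((exists x, A' x) -> rk A' <= M) -> rk U <= M.
Proof.
move=> hA hA' hU sub ne b1 b2.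
case: (rk_union hA hA' hU sub ne (leqnn (rk U))) => [[e le]|[e le]].
  exact: leq_trans le (b1 e).
exact: leq_trans le (b2 e).
Qed.

Definition bigU n (l : list (('I_n -> G) -> Prop)) x := exists A, In A l /\ A x.

Lemma D_bigU n (l : list (('I_n -> G) -> Prop)) : (forall A, In A l -> Df A) -> Df (bigU l).
Proof.
elim: l => [|A l IH] h.
  by apply: D_ext (@D_false G n) _ => x; split=> // [[A [[]]]].
apply: D_ext (D_or (h A (or_introl erefl)) (IH (fun B i => h B (or_intror i)))) _ => x.
split; first by case=> [a|[B [i b]]]; [exists A; split=> //; left | exists B; split=> //; right].
by case=> B [[<-|i] b]; [left|right; exists B].
Qed.

Lemma rk_union_list n m (A U : ('I_n -> G) -> Prop) (l : list (('I_n -> G) -> Prop)) :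
  Df A -> Df U -> (forall B, In B l -> Df B) ->
  (forall x, U x -> A x \/ bigU l x) -> (exists x, U x) -> m <= rk U ->
  ((exists x, A x) /\ m <= rk A) \/ exists B, In B l /\ (exists x, B x) /\ m <= rk B.
Proof.
elim: l A U => [|C l IH] A U hA hU hl sub ne le.
  have sub' : forall x, U x -> A x \/ False.
    by move=> x u; case: (sub x u) => [a|[B [[]]]]; left.
  by case: (rk_union hA (@D_false G n) hU sub' ne le) => [a|[[x []] _]]; left.
case: (rk_union hA (D_bigU hl) hU sub ne le) => [a|[ne' le']]; first by left.
have hC : Df C by apply: hl; left.
have sub2 : forall x, bigU (C :: l) x -> C x \/ bigU l x.
  by move=> x [B [[<-|i] b]]; [left|right; exists B].
case: (IH C (bigU (C :: l)) hC (D_bigU hl) (fun B i => hl B (or_intror i)) sub2 ne' le').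
- by move=> [e r]; right; exists C; split=> //; left.
- by case=> B [i r]; right; exists B; split=> //; right.
Qed.

End Rank.

Section Rank2.
Variable G : fMR_group.
Local Notation "x ** y" := (gmul x y) (at level 40, left associativity).
Local Notation one := (gone G).
Local Notation inv := (@ginv G).
Local Notation Df := (@Def G).

Definition cmp n (A : ('I_n -> G) -> Prop) (s : 'I_n -> 'I_n) :=
  fun x : 'I_n -> G => A (fun i => x (s i)).

Lemma rk_perm_le n (s t : 'I_n -> 'I_n) : (forall i, s (t i) = i) -> (forall i, t (s i) = i) ->
  forall m (A : ('I_n -> G) -> Prop), Df A -> (exists x, A x) -> m <= rk A -> m <= rk (cmp A s).
Proof.
move=> st ts; elim=> [|m IH] A hA [x Ax] // le.
have ne : exists y, cmp A s y.
  exists (fun i => x (t i)); rewrite /cmp.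
  by have -> : (fun i => x (t (s i))) = x by apply: functional_extensionality => i; rewrite ts.
move: le => /(rk_def hA (ex_intro _ x Ax)) [Bf [h1 h2]].
apply/(rk_def (Def_sub s hA) ne); exists (fun k => cmp (Bf k) s); split.
  move=> k; have [d [[y b] [sb r]]] := h1 k; split; first exact: Def_sub.
  split.
    exists (fun i => y (t i)); rewrite /cmp.
    by have -> : (fun i => y (t (s i))) = y by apply: functional_extensionality => i; rewrite ts.
  split; first by move=> z; exact: sb.
  by apply: IH => //; exists y.
by move=> k l z ne'; apply: h2.
Qed.

Lemma rk_perm n (s t : 'I_n -> 'I_n) (A : ('I_n -> G) -> Prop) :
  (forall i, s (t i) = i) -> (forall i, t (s i) = i) -> Df A -> (exists x, A x) ->
  rk (cmp A s) = rk A.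
Proof.
move=> st ts hA ne; apply/eqP; rewrite eqn_leq; apply/andP; split; last exact: rk_perm_le.
have -> : A = cmp (cmp A s) t.
  apply: functional_extensionality => x; rewrite /cmp.
  by have -> : (fun i => x (t (s i))) = x by apply: functional_extensionality => i; rewrite ts.
have hA' : Df (cmp A s) by exact: Def_sub.
apply: rk_perm_le => //; last first.
  by have -> : (cmp (cmp A s) t) = A; [apply: functional_extensionality => x; rewrite /cmp;
    have -> : (fun i => x (t (s i))) = x by apply: functional_extensionality => i; rewrite ts | ].
case: ne => x Ax; exists (fun i => x (t i)); rewrite /cmp.
by have -> : (fun i => x (t (s i))) = x by apply: functional_extensionality => i; rewrite ts.
Qed.

Definition rk1 (P : G -> Prop) := rk (fun x : 'I_1 -> G => P (x ord0)).
Definition set2 (R : G -> G -> Prop) := fun z : 'I_(1 + 1) -> G => R (z (up ord0)) (z (lst 1)).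
Definition rk2 R := rk (set2 R).

Definition swp : 'I_(1 + 1) -> 'I_(1 + 1) := sext2 (lst 1) (up ord0).
Lemma swpK i : swp (swp i) = i.
Proof.
case: (split_ordP i) => k ->; rewrite (ord1 k).
  by change (swp (swp (up ord0)) = up ord0); rewrite /swp /sext2 split_up split_lst.
by change (swp (swp (lst 1)) = lst 1); rewrite /swp /sext2 split_lst split_up.
Qed.

Lemma rk2_swap R : def2 R -> (exists x y, R x y) -> rk2 (fun a b => R b a) = rk2 R.
Proof.
move=> h [x [y r]]; rewrite /rk2.
have -> : set2 (fun a b => R b a) = cmp (set2 R) swp.
  by apply: functional_extensionality => z; rewrite /cmp /set2 /swp /sext2 split_up split_lst.
rewrite (@rk_perm _ swp swp) //; try exact: swpK.
exists (fun i => if fintype.split i is inl _ then x else y).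
by rewrite /set2 split_up split_lst.
Qed.

Lemma fibre_set2 R (x : 'I_1 -> G) : fibre (set2 R) x = fun y => R (x ord0) (y ord0).
Proof. by apply: functional_extensionality => y; rewrite /fibre /set2 tjoin1 ext_up ext_lst. Qed.

Lemma rk2_add R k : def2 R -> (exists x y, R x y) ->
  (forall x, (exists y, R x y) -> rk1 (R x) = k) ->
  rk2 R = rk1 (fun x => exists y, R x y) + k.
Proof.
move=> h [x [y r]] hf.
have ne : exists z, set2 R z.
  exists (fun i => if fintype.split i is inl _ then x else y).
  by rewrite /set2 split_up split_lst.
rewrite /rk2 (@rk_add _ 1 1 _ k h ne); last first.
  move=> a; rewrite fibre_set2 => -[b rb]; apply: hf; by exists (b ord0).
congr (_ + _); rewrite /rk1; congr (rk _); apply: functional_extensionality => a.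
apply: propositional_extensionality; rewrite fibre_set2; split.
  by case=> b rb; exists (b ord0).
by case=> b rb; exists (fun _ => b).
Qed.

Lemma rk1_definable R k : def2 R -> definable (fun x => (exists y, R x y) /\ rk1 (R x) = k).
Proof.
move=> h; apply: D_ext (rk_definable k h) _ => a.
rewrite fibre_set2; split.
  by case=> [[b rb] e]; split=> //; exists (b ord0).
by case=> [[b rb] e]; split=> //; exists (fun _ => b).
Qed.

Lemma rk1_up P m : definable P -> (exists x, P x) ->
  forall Q : nat -> G -> Prop,
  (forall k, definable (Q k) /\ (exists x, Q k x) /\ (forall x, Q k x -> P x) /\ m <= rk1 (Q k)) ->
  (forall k l x, k <> l -> Q k x -> Q l x -> False) -> m.+1 <= rk1 P.
Proof.
move=> hP [x Px] Q hQ hd.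
apply/(rk_def hP (ex_intro _ (fun _ => x) Px)).
exists (fun k y => Q k (y ord0)); split.
  move=> k; have [d [[y q] [s r]]] := hQ k; split=> //; split; first by exists (fun _ => y).
  by split=> // z; exact: s.
by move=> k l z ne; apply: hd.
Qed.

Lemma rk1_down P m : definable P -> (exists x, P x) -> m.+1 <= rk1 P ->
  exists Q : nat -> G -> Prop,
  (forall k, definable (Q k) /\ (exists x, Q k x) /\ (forall x, Q k x -> P x) /\ m <= rk1 (Q k)) /\
  (forall k l x, k <> l -> Q k x -> Q l x -> False).
Proof.
move=> hP [x Px] /(rk_def hP (ex_intro _ (fun _ => x) Px)) [Bf [h1 h2]].
have E : forall k, Bf k = fun y => Bf k (fun _ => y ord0).
  by move=> k; apply: functional_extensionality => y; rewrite -tup1.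
exists (fun k y => Bf k (fun _ => y)); split.
  move=> k; have [d [[y b] [s r]]] := h1 k.
  split; first by rewrite /definable -E.
  split; first by exists (y ord0); rewrite -tup1.
  split; first by move=> z b'; exact: (s _ b').
  by rewrite /rk1 -E.
by move=> k l z ne b b'; apply: (h2 k l _ ne b b').
Qed.

Lemma def_single (c : G) : definable (fun x => x = c).
Proof. exact: (Def_const ord0 c). Qed.

Lemma rk1_finite P : definable P -> (exists x, P x) -> finite_set P -> rk1 P = 0.
Proof.
move=> hP ne [s hs]; case e: (rk1 P) => [|m] //.
have : 1 <= rk1 P by rewrite e.
case/(rk1_down hP ne) => Q [hQ hd].
pose f k := epsilon (inhabits one) (fun x => Q k x).
have fQ : forall k, Q k (f k).
  move=> k; have [_ [ex _]] := hQ k; exact: (epsilon_spec _ _ ex).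
have [k [l [ne' e']]] := pigeon (f := f) (s := s) (fun k => hs _ (proj1 (proj2 (proj2 (hQ k))) _ (fQ k))).
by case: (hd k l (f k) ne' (fQ k)); rewrite e'.
Qed.

Lemma rk1_infinite P : definable P -> ~ finite_set P -> 1 <= rk1 P.
Proof.
move=> hP nf.
have step : forall s : list G, exists x, P x /\ forall c, In c s -> x <> c.
  move=> s; apply: NNPP => n; apply: nf; exists s => y py; apply: NNPP => ni.
  by apply: n; exists y; split=> // c ic e; apply: ni; rewrite e.
have [f [fP fR]] := @avoid_seq G P (fun x c => x <> c) (inhabits one) step.
apply: (rk1_up hP (ex_intro _ (f 0) (fP 0)) (Q := fun k y => y = f k)).
  by move=> k; split; [exact: def_single | split; [exists (f k) | split => // y ->]].
move=> k l y ne -> e; case: (ltngtP k l) => [lt|lt|e'] //.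
  by apply: (fR _ _ lt).
by apply: (fR _ _ lt); rewrite e.
Qed.

Lemma rk1_zero_finite P : definable P -> rk1 P = 0 -> finite_set P.
Proof.
by move=> hP e; apply: NNPP => nf; have := rk1_infinite hP nf; rewrite e.
Qed.

Lemma rk1_ext P Q : (forall x, P x <-> Q x) -> rk1 P = rk1 Q.
Proof. by move=> h; rewrite (pred_ext h). Qed.

Lemma rk1_mono P Q : definable P -> definable Q -> (exists x, P x) ->
  (forall x, P x -> Q x) -> rk1 P <= rk1 Q.
Proof.
move=> hP hQ [x Px] s; apply: rk_mono => //; first by exists (fun _ => x).
by move=> y; apply: s.
Qed.

Lemma rk1_union P Q U m : definable P -> definable Q -> definable U ->
  (forall x, U x -> P x \/ Q x) -> (exists x, U x) -> m <= rk1 U ->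
  ((exists x, P x) /\ m <= rk1 P) \/ ((exists x, Q x) /\ m <= rk1 Q).
Proof.
move=> hP hQ hU s [x Ux] le.
case: (rk_union hP hQ hU (fun y => s (y ord0)) (ex_intro _ (fun _ => x) Ux) le) => [[[y p] r]|[[y p] r]].
  by left; split=> //; exists (y ord0).
by right; split=> //; exists (y ord0).
Qed.

Lemma rk_bij P (f : G -> G) : definable P -> def2 (fun x y => P x /\ y = f x) ->
  injective f -> (exists x, P x) -> rk1 (fun y => exists x, P x /\ y = f x) = rk1 P.
Proof.
move=> hP hR inj [x Px].
have ne : exists a b, P a /\ b = f a by exists x, (f x).
have E1 : rk2 (fun a b => P a /\ b = f a) = rk1 P.
  rewrite (rk2_add (k := 0) hR ne) ?addn0.
    by apply: rk1_ext => a; split; [case=> b [] | move=> pa; exists (f a)].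
  move=> a [b [pa _]]; rewrite (rk1_ext (Q := fun y => y = f a)); last by move=> y; split; [case|].
  apply: rk1_finite; [exact: def_single| by exists (f a)| by exists (f a :: nil) => y ->; left].
have E2 : rk2 (fun b a => P a /\ b = f a) = rk1 (fun y => exists x, P x /\ y = f x).
  rewrite (rk2_add (k := 0) (def2_swap hR) (ex_intro _ (f x) (ex_intro _ x (conj Px erefl)))) ?addn0 //.
  move=> b [a [pa e]]; rewrite (rk1_ext (Q := fun y => y = a)); last first.
    by move=> y; split; [case=> py eb; apply: inj; rewrite -eb e | move=> ->].
  apply: rk1_finite; [exact: def_single| by exists a| by exists (a :: nil) => y ->; left].
by rewrite -E2 rk2_swap.
Qed.

Lemma rk_comp_bij P (f g : G -> G) : definable P ->
  (forall n (i : 'I_n), tdef (fun x => f (x i))) ->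
  (forall x, g (f x) = x) -> (forall x, f (g x) = x) -> (exists x, P x) ->
  rk1 (fun y => P (f y)) = rk1 P.
Proof.
move=> hP hf gf fg [x Px].
have hPf : definable (fun y => P (f y)) by exact: (tdef_comp hP (hf 1 ord0)).
have hR : def2 (fun a b => P (f a) /\ b = f a).
  apply: D_and; first exact: (tdef_comp hP (hf _ (up ord0))).
  exact: (tdef_eq (tdef_var _ _) (hf _ (up ord0))).
have inj : injective f by move=> a b e; rewrite -(gf a) e gf.
rewrite -(rk_bij hPf hR inj); last by exists (g x); rewrite fg.
apply: rk1_ext => y; split; first by case=> a [pa ->].
by move=> py; exists (g y); rewrite fg.
Qed.

Lemma in_seq0 k n : In k (List.seq 0 n) <-> k < n.
Proof.
rewrite in_seq /=; split; first by case=> _ /ltP.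
by move=> /ltP h; split=> //; apply/leP.
Qed.

Lemma rk2_fib_le R b : def2 R -> (exists x y, R x y) ->
  (forall x y, R x y -> rk1 (R x) <= b) -> rk2 R <= rk1 (fun x => exists y, R x y) + b.
Proof.
move=> hR [x0 [y0 r0]] hb.
pose Rk k := fun x y => R x y /\ ((exists y, R x y) /\ rk1 (R x) = k).
have hRk : forall k, def2 (Rk k).
  move=> k; apply: D_and => //.
  exact: (D_at (up ord0) (rk1_definable k hR)).
have hdom : definable (fun x => exists y, R x y) by exact: def2_proj.
pose l := List.map (fun k => set2 (Rk k)) (List.seq 0 b.+1).
have ne : exists z, set2 R z.
  exists (fun i => if fintype.split i is inl _ then x0 else y0).
  by rewrite /set2 split_up split_lst.
have hl : forall A, In A l -> Df A.
  by move=> A; rewrite /l in_map_iff => -[k [<- _]]; exact: hRk.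
case: (rk_union_list (m := rk2 R) (@D_false G (1 + 1)) hR hl _ ne (leqnn _)).
- move=> z Rz; right; exists (set2 (Rk (rk1 (R (z (up ord0)))))); split.
    rewrite /l in_map_iff; exists (rk1 (R (z (up ord0)))); split=> //.
    rewrite in_seq0 ltnS; exact: hb Rz.
  split=> //; split; [by exists (z (lst 1)) | by []].
- by case=> [[? []]].
case=> A [inA [[z Az] le]].
move: inA; rewrite /l in_map_iff => -[k [ek kin]]; subst A.
move: kin; rewrite in_seq0 ltnS => kb.
apply: leq_trans le _.
have e : rk2 (Rk k) = rk1 (fun x => exists y, Rk k x y) + k.
  apply: rk2_add => //; first by exists (z (up ord0)), (z (lst 1)).
  move=> x [y [_ [ex ek]]]; rewrite -ek; apply: rk1_ext => y'; split; first by case.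
  by move=> r; split=> //; split=> //.
rewrite /rk2 in e; rewrite e; apply: leq_add => //.
apply: rk1_mono => //; first exact: (def2_proj (hRk k)).
  by exists (z (up ord0)), (z (lst 1)).
by move=> x [y [r _]]; exists y.
Qed.

End Rank2.

Ltac tdt := repeat first [apply: tdef_mul | apply: tdef_inv | apply: tdef_var | apply: tdef_const].

Section Subgroups.
Variable G : fMR_group.
Local Notation "x ** y" := (gmul x y) (at level 40, left associativity).
Local Notation one := (gone G).
Local Notation inv := (@ginv G).
Local Notation Df := (@Def G).

Definition dsub (H : G -> Prop) := definable_subgroup H.
Definition rcoset (K : G -> Prop) (c : G) := fun x : G => K (x ** inv c).

Lemma sub1 (H : G -> Prop) : is_subgroup H -> H one. Proof. by case. Qed.
Lemma subM (H : G -> Prop) (x y : G) : is_subgroup H -> H x -> H y -> H (x ** y).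
Proof. by case=> _ [h _]; apply: h. Qed.
Lemma subV (H : G -> Prop) (x : G) : is_subgroup H -> H x -> H (inv x).
Proof. by case=> _ [_ h]; apply: h. Qed.
Lemma subVr (H : G -> Prop) (x : G) : is_subgroup H -> H (inv x) -> H x.
Proof. by move=> s /(subV s); rewrite invgK'. Qed.

Lemma def_conj (P : G -> Prop) (g : G) : definable P -> definable (conj_set P g).
Proof. by move=> h; apply: (tdef_comp h); tdt. Qed.
Lemma def_rcoset (P : G -> Prop) (c : G) : definable P -> definable (rcoset P c).
Proof. by move=> h; apply: (tdef_comp h); tdt. Qed.
Lemma def_ltr (P : G -> Prop) (g : G) : definable P -> definable (fun y => P (inv g ** y)).
Proof. by move=> h; apply: (tdef_comp h); tdt. Qed.
Lemma def_inv (P : G -> Prop) : definable P -> definable (fun y => P (inv y)).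
Proof. by move=> h; apply: (tdef_comp h); tdt. Qed.

Lemma rk_conj (P : G -> Prop) (g : G) : definable P -> (exists x, P x) -> rk1 (conj_set P g) = rk1 P.
Proof.
move=> h ne; apply: (@rk_comp_bij _ _ _ (fun y => inv g ** y ** g)) => //.
- by move=> n i; tdt.
- by move=> x; rewrite !mulgA' mulVg' mul1g' mulgKV'.
- by move=> x; rewrite !mulgA' mulgV' mul1g' mulgK'.
Qed.
Lemma rk_rcoset (P : G -> Prop) (c : G) : definable P -> (exists x, P x) -> rk1 (rcoset P c) = rk1 P.
Proof.
move=> h ne; apply: (@rk_comp_bij _ _ _ (fun y => y ** c)) => //.
- by move=> n i; tdt.
- by move=> x; rewrite mulgKV'.
- by move=> x; rewrite mulgK'.
Qed.
Lemma rk_ltr (P : G -> Prop) (g : G) : definable P -> (exists x, P x) -> rk1 (fun y => P (inv g ** y)) = rk1 P.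
Proof.
move=> h ne; apply: (@rk_comp_bij _ _ _ (fun y => g ** y)) => //.
- by move=> n i; tdt.
- by move=> x; rewrite mulKVg'.
- by move=> x; rewrite mulKg'.
Qed.
Lemma rk_inv (P : G -> Prop) : definable P -> (exists x, P x) -> rk1 (fun y => P (inv y)) = rk1 P.
Proof.
move=> h ne; apply: (@rk_comp_bij _ _ _ inv) => //.
- by move=> n i; tdt.
- by move=> x; rewrite invgK'.
- by move=> x; rewrite invgK'.
Qed.

Lemma rk1_union_list m (U : G -> Prop) (l : list (G -> Prop)) :
  definable U -> (forall B, In B l -> definable B) ->
  (forall x, U x -> exists B, In B l /\ B x) -> (exists x, U x) -> m <= rk1 U ->
  exists B, In B l /\ (exists x, B x) /\ m <= rk1 B.
Proof.
move=> hU hl sub [x Ux] le.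
pose l' := List.map (fun B => fun y : 'I_1 -> G => B (y ord0)) l.
have hl' : forall B, In B l' -> Df B.
  by move=> B; rewrite /l' in_map_iff => -[C [<- i]]; exact: hl.
case: (rk_union_list (@D_false G 1) hU hl' _ (ex_intro _ (fun _ => x) Ux) le).
- move=> y Uy; right; have [B [i b]] := sub _ Uy.
  exists (fun y => B (y ord0)); split=> //; rewrite /l' in_map_iff; by exists B.
- by case=> [[? []]].
case=> B' [i [[y b] r]]; move: i; rewrite /l' in_map_iff => -[B [eB i]]; subst B'.
by exists B; split=> //; split=> //; exists (y ord0).
Qed.

Lemma inv_mulV (a b y : G) : inv (y ** inv a) ** (y ** inv b) = a ** inv b.
Proof. by rewrite invMg' invgK' -mulgA' mulKg'. Qed.

Lemma rk_of_fi (K H : G -> Prop) : dsub K -> dsub H -> finite_index K H -> rk1 H <= rk1 K.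
Proof.
move=> [sK dK] [sH dH] [s hs].
have hl : forall B, In B (List.map (rcoset K) s) -> definable B.
  by move=> B; rewrite in_map_iff => -[c [<- _]]; exact: def_rcoset.
have cov : forall x, H x -> exists B, In B (List.map (rcoset K) s) /\ B x.
  move=> x hx; have [c [i k]] := hs x hx; exists (rcoset K c); split=> //.
  exact: in_map.
have [B [i [[y b] r]]] := rk1_union_list (m := rk1 H) dH hl cov
  (ex_intro _ one (sub1 sH)) (leqnn _).
move: i; rewrite in_map_iff => -[c [eB _]]; subst B.
by rewrite rk_rcoset // in r; exists one; exact: sub1.
Qed.

Lemma fi_of_rk (K H : G -> Prop) : dsub K -> dsub H -> (forall x, K x -> H x) -> rk1 H <= rk1 K ->
  finite_index K H.
Proof.
move=> [sK dK] [sH dH] KH le; apply: NNPP => nfi.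
have step : forall s : list G, exists x, H x /\ forall c, In c s -> ~ K (x ** inv c).
  move=> s; apply: NNPP => n; apply: nfi; exists s => x hx; apply: NNPP => nc.
  apply: n; exists x; split=> // c ic kc; apply: nc; by exists c.
have [f [fP fR]] := @avoid_seq G H (fun x c => ~ K (x ** inv c)) (inhabits one) step.
have : (rk1 K).+1 <= rk1 H.
  apply: (rk1_up dH (ex_intro _ one (sub1 sH)) (Q := fun k => rcoset K (f k))).
    move=> k; split; first exact: def_rcoset.
    split; first by exists (f k); rewrite /rcoset mulgV'; exact: sub1.
    split.
      move=> y ky; rewrite -(mulgKV' (f k) y); apply: subM => //; first exact: KH.
    by rewrite rk_rcoset //; exists one; exact: sub1.
  move=> k l y ne ky ly.
  case: (ltngtP k l) => [lt|lt|e] //.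
    apply: (fR _ _ lt); rewrite -(inv_mulV (f l) (f k) y); apply: subM => //; exact: subV.
  apply: (fR _ _ lt); rewrite -(inv_mulV (f k) (f l) y); apply: subM => //; exact: subV.
by rewrite ltnNge le.
Qed.

Lemma fi_iff (K H : G -> Prop) : dsub K -> dsub H -> (forall x, K x -> H x) ->
  finite_index K H <-> rk1 K = rk1 H.
Proof.
move=> hK hH KH; split.
  move=> fi; apply/eqP; rewrite eqn_leq (rk_of_fi hK hH fi) andbT.
  apply: rk1_mono; [exact: hK.2 | exact: hH.2 | exists one; exact: (sub1 hK.1) | exact: KH].
by move=> e; apply: fi_of_rk => //; rewrite e.
Qed.

Lemma dsubI (K L : G -> Prop) : dsub K -> dsub L -> dsub (fun x => K x /\ L x).
Proof.
move=> [sK dK] [sL dL]; split; last exact: D_and.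
split; first by split; exact: sub1.
split; first by move=> x y [? ?] [? ?]; split; apply: subM.
by move=> x [? ?]; split; apply: subV.
Qed.

Lemma rk_inter (K L H : G -> Prop) : dsub K -> dsub L -> dsub H -> (forall x, K x -> H x) ->
  (forall x, L x -> H x) -> rk1 K = rk1 H -> rk1 L = rk1 H -> rk1 (fun x => K x /\ L x) = rk1 H.
Proof.
move=> hK hL hH KH LH eK eL.
have [s hs] := fi_of_rk hL hH LH (eq_leq (esym eL)).
have fi : finite_index (fun x => K x /\ L x) K.
  pose pk c := epsilon (inhabits one) (fun h => K h /\ L (h ** inv c)).
  exists (List.map pk s) => x kx.
  have [c [ic lc]] := hs x (KH x kx).
  have [k1 l1] : K (pk c) /\ L (pk c ** inv c).
    by apply: (epsilon_spec (inhabits one) (fun h => K h /\ L (h ** inv c))); exists x.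
  exists (pk c); split; first exact: in_map.
  split; first by apply: (subM hK.1 kx); exact: (subV hK.1 k1).
  have -> : x ** inv (pk c) = (x ** inv c) ** inv (pk c ** inv c).
    by rewrite invMg' invgK' -mulgA' mulKg'.
  by apply: (subM hL.1 lc); exact: (subV hL.1 l1).
rewrite -eK; apply/eqP; rewrite eqn_leq (rk_of_fi (dsubI hK hL) hK fi) andbT.
apply: rk1_mono; [exact: (dsubI hK hL).2 | exact: hK.2 | | by move=> x []].
by exists one; split; [exact: (sub1 hK.1) | exact: (sub1 hL.1)].
Qed.

Definition full (K H : G -> Prop) := dsub K /\ (forall x, K x -> H x) /\ rk1 K = rk1 H.

Lemma exists_min (H : G -> Prop) : dsub H -> exists H0, full H0 H /\
  (forall K, dsub K -> (forall x, K x -> H0 x) -> rk1 K = rk1 H -> forall x, H0 x -> K x).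
Proof.
move=> hH; apply: NNPP => nex.
have step : forall K, full K H -> exists K', full K' H /\ (forall x, K' x -> K x) /\ exists x, K x /\ ~ K' x.
  move=> K fK; apply: NNPP => n; apply: nex; exists K; split=> // K' dK' sK' eK' x kx.
  apply: NNPP => nk; apply: n; exists K'; split; first by split=> //; split=> // y /sK' /(proj1 (proj2 fK)).
  by split=> //; exists x.
pose st K := epsilon (inhabits H) (fun K' => full K' H /\ (forall x, K' x -> K x) /\ exists x, K x /\ ~ K' x).
have stP : forall K, full K H -> full (st K) H /\ (forall x, st K x -> K x) /\ exists x, K x /\ ~ st K x.
  by move=> K fK; apply: (epsilon_spec (inhabits H) _ (step K fK)).
pose c i := iter i st H.
have fc : forall i, full (c i) H.
  elim=> [|i IH]; first by split=> //; split.
  by rewrite /c iterS; case: (stP _ IH).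
have cS : forall i x, c i.+1 x -> c i x.
  by move=> i x; rewrite /c iterS; case: (stP _ (fc i)) => _ [h _]; apply: h.
have cmono : forall i j x, i <= j -> c j x -> c i x.
  move=> i j x; elim: j => [|j IH]; first by rewrite leqn0 => /eqP ->.
  rewrite leq_eqVlt => /orP [/eqP -> //|]; rewrite ltnS => le cj; apply: IH => //; exact: cS.
pose xw i := epsilon (inhabits one) (fun x => c i x /\ ~ c i.+1 x).
have xP : forall i, c i (xw i) /\ ~ c i.+1 (xw i).
  move=> i; apply: (epsilon_spec (inhabits one) (fun x => c i x /\ ~ c i.+1 x)); rewrite /c iterS.
  by case: (stP _ (fc i)) => _ [_ e].
have [[sH dH] _] := (hH, 0).
have : (rk1 H).+1 <= rk1 H.
  apply: (rk1_up dH (ex_intro _ one (sub1 sH)) (Q := fun i => rcoset (c i.+1) (xw i))).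
    move=> i; have [[si di] [ci ei]] := fc i.+1.
    split; first exact: def_rcoset.
    split; first by exists (xw i); rewrite /rcoset mulgV'; exact: sub1.
    split.
      move=> y ky; apply: (proj1 (proj2 (fc i))).
      rewrite -(mulgKV' (xw i) y); apply: (subM (fc i).1.1 _ (proj1 (xP i))); exact: cS.
    rewrite rk_rcoset ?ei //; exists one; exact: sub1.
  have disj : forall k l y, k < l -> rcoset (c k.+1) (xw k) y -> rcoset (c l.+1) (xw l) y -> False.
    move=> k l y lt yk yl; apply: (proj2 (xP k)).
    have cy : c k.+1 y.
      apply: (cmono k.+1 l y lt).
      rewrite -(mulgKV' (xw l) y); apply: (subM (fc l).1.1 _ (proj1 (xP l))); exact: cS.
    apply: (subVr (fc k.+1).1.1); rewrite -(mulKg' y (inv (xw k))); apply: (subM (fc k.+1).1.1 _ yk); exact: (subV (fc k.+1).1.1 cy).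
  move=> k l y ne yk yl; case: (ltngtP k l) => [lt|lt|e] //.
    exact: disj lt yk yl.
  exact: disj lt yl yk.
by rewrite ltnn.
Qed.

End Subgroups.

Section Connected.
Variable G : fMR_group.
Local Notation "x ** y" := (gmul x y) (at level 40, left associativity).
Local Notation one := (gone G).
Local Notation inv := (@ginv G).
Local Notation Df := (@Def G).

Definition bigU1 (l : list (G -> Prop)) (y : G) := exists A, In A l /\ A y.
Lemma def_bigU1 l : (forall A, In A l -> definable A) -> definable (bigU1 l).
Proof.
elim: l => [|A l IH] h.
  by apply: D_ext (@D_false G 1) _ => x; split=> // [[A [[]]]].
apply: D_ext (D_or (h A (or_introl erefl)) (IH (fun B i => h B (or_intror i)))) _ => x.
split; first by case=> [a|[B [i b]]]; [exists A; split=> //; left | exists B; split=> //; right].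
by case=> B [[<-|i] b]; [left|right; exists B].
Qed.

Lemma rk_remove P (a : G) : definable P -> (exists x, P x) -> 1 <= rk1 P ->
  (exists x, P x /\ x <> a) /\ rk1 (fun x => P x /\ x <> a) = rk1 P.
Proof.
move=> hP ne le.
have hPa : definable (fun x => P x /\ x <> a) by apply: D_and => //; apply: D_not; exact: def_single.
case: (rk1_union (m := rk1 P) hPa (def_single a) hP (U := P) _ ne (leqnn _)).
- move=> x px; case: (classic (x = a)) => e; [right | left] => //.
- move=> [ne' r]; split=> //; apply/eqP; rewrite eqn_leq r andbT.
  by apply: rk1_mono => //; move=> x [].
- move=> [_ r]; exfalso.
  have fs : finite_set (fun x => x = a) by exists (a :: nil) => y ->; left.
  have := rk1_finite (def_single a) (ex_intro _ a erefl) fs.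
  by move=> e; rewrite e leqn0 in r; rewrite (eqP r) in le.
Qed.

Variable H : G -> Prop.
Hypothesis hH : dsub H.
Hypothesis conn : forall K, dsub K -> (forall x, K x -> H x) -> rk1 K = rk1 H -> forall x, H x -> K x.
Local Notation rho := (rk1 H).

Definition gen (X : G -> Prop) :=
  definable X /\ (exists x, X x) /\ (forall x, X x -> H x) /\ rho <= rk1 X.

Lemma gen_rk X : gen X -> rk1 X = rho.
Proof.
case=> d [ne [s r]]; apply/eqP; rewrite eqn_leq r andbT; apply: rk1_mono => //; exact: hH.2.
Qed.

Lemma gen_ext X Y : gen X -> (forall x, X x <-> Y x) -> gen Y.
Proof. by move=> g e; rewrite -(pred_ext e). Qed.

Lemma gen_sup X Y : gen X -> definable Y -> (forall x, X x -> Y x) -> (forall x, Y x -> H x) -> gen Y.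
Proof.
case=> d [[x Xx] [s r]] dY XY YH; split=> //; split; first by exists x; apply: XY.
split=> //; apply: leq_trans r _; apply: rk1_mono => //; by exists x.
Qed.

Lemma no_inf (Q : nat -> G -> Prop) : (forall k, gen (Q k)) ->
  (forall k l x, k <> l -> Q k x -> Q l x -> False) -> False.
Proof.
move=> hQ hd.
have : rho.+1 <= rho.
  apply: (rk1_up hH.2 (ex_intro _ one (sub1 hH.1)) (Q := Q)); last exact: hd.
  by move=> k; have [d [ne [s r]]] := hQ k.
by rewrite ltnn.
Qed.

Definition indec X := gen X /\ forall Y1 Y2, gen Y1 -> gen Y2 ->
  (forall x, Y1 x -> X x) -> (forall x, Y2 x -> X x) -> exists x, Y1 x /\ Y2 x.

Lemma exists_indec : exists X, indec X.
Proof.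
apply: NNPP => nex.
have step : forall X, gen X -> exists p : (G -> Prop) * (G -> Prop),
   gen p.1 /\ gen p.2 /\ (forall x, p.1 x -> X x) /\ (forall x, p.2 x -> X x) /\
   (forall x, p.1 x -> p.2 x -> False).
  move=> X gX; apply: NNPP => n; apply: nex; exists X; split=> // Y1 Y2 g1 g2 s1 s2.
  apply: NNPP => nm; apply: n; exists (Y1, Y2); do 4! split=> //.
  by move=> x a b; apply: nm; exists x.
pose st X := epsilon (inhabits (H, H)) (fun p : (G -> Prop) * (G -> Prop) =>
   gen p.1 /\ gen p.2 /\ (forall x, p.1 x -> X x) /\ (forall x, p.2 x -> X x) /\
   (forall x, p.1 x -> p.2 x -> False)).
have stP : forall X, gen X -> gen (st X).1 /\ gen (st X).2 /\ (forall x, (st X).1 x -> X x) /\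
   (forall x, (st X).2 x -> X x) /\ (forall x, (st X).1 x -> (st X).2 x -> False).
  by move=> X gX; exact: (epsilon_spec _ _ (step X gX)).
pose R := fix R i := match i with 0 => H | i'.+1 => fun x => R i' x /\ ~ (st (R i')).1 x end.
have gR : forall i, gen (R i).
  elim=> [|i IH] /=.
    split; first exact: hH.2; split; first by exists one; exact: (sub1 hH.1).
    by split.
  have [g1 [g2 [s1 [s2 d]]]] := stP _ IH.
  apply: (gen_sup g2); first by apply: D_and; [exact: IH.1 | apply: D_not; exact: g1.1].
    by move=> x p2; split; [exact: s2 | move=> p1; exact: d x p1 p2].
  by move=> x [r _]; exact: IH.2.2.1 x r.
have Rmono : forall i j x, i <= j -> R j x -> R i x.
  move=> i j x; elim: j => [|j IH]; first by rewrite leqn0 => /eqP ->.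
  rewrite leq_eqVlt => /orP [/eqP -> //|]; rewrite ltnS => le [rj _]; exact: IH.
apply: (no_inf (Q := fun i => (st (R i)).1)).
  by move=> k; case: (stP _ (gR k)).
have disj : forall k l x, k < l -> (st (R k)).1 x -> (st (R l)).1 x -> False.
  move=> k l x lt a b.
  have [_ [_ [s1 _]]] := stP _ (gR l).
  have : R k.+1 x by apply: (Rmono _ _ _ lt); exact: s1.
  by case.
move=> k l x ne a b; case: (ltngtP k l) => [lt|lt|e] //.
  exact: disj lt a b.
exact: disj lt b a.
Qed.

Lemma indec_meet X C1 C2 : indec X -> gen C1 -> gen C2 -> (forall x, C1 x -> X x) ->
  (forall x, C2 x -> X x) -> gen (fun x => C1 x /\ C2 x).
Proof.
move=> [gX iX] g1 g2 s1 s2.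
have d12 : definable (fun x => C1 x /\ C2 x) by apply: D_and; [exact: g1.1|exact: g2.1].
have d21 : definable (fun x => C2 x /\ ~ C1 x) by apply: D_and; [exact: g2.1|apply: D_not; exact: g1.1].
case: (rk1_union (m := rho) d12 d21 g2.1 (U := C2) _ g2.2.1 g2.2.2.2).
- by move=> x c2; case: (classic (C1 x)) => c1; [left|right].
- move=> [ne r]; split=> //; split=> //; split=> // x [c _]; exact: g1.2.2.1.
- move=> [ne r]; exfalso.
  have g3 : gen (fun x => C2 x /\ ~ C1 x).
    by split=> //; split=> //; split=> // x [c _]; exact: g2.2.2.1.
  have [x [a [_ b]]] := iX _ _ g1 g3 s1 (fun x h => s2 x h.1).
  exact: b a.
Qed.

Definition tr (g : G) (X : G -> Prop) := fun y => X (inv g ** y).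

Lemma gen_tr g X : H g -> gen X -> gen (tr g X).
Proof.
move=> hg [d [[x Xx] [s r]]]; split; first exact: def_ltr.
split; first by exists (g ** x); rewrite /tr mulKg'.
split; first by move=> y /s hy; rewrite -(mulKVg' g y); exact: (subM hH.1 hg hy).
by rewrite /tr rk_ltr //; exists x.
Qed.

Lemma tr_tr g h X : tr g (tr h X) = tr (g ** h) X.
Proof. by apply: functional_extensionality => y; rewrite /tr invMg' mulgA'. Qed.

Lemma tr_inv g X : tr (inv g) (tr g X) = X.
Proof. by apply: functional_extensionality => y; rewrite /tr invgK' mulKg'. Qed.

Lemma indec_tr g X : H g -> indec X -> indec (tr g X).
Proof.
move=> hg [gX iX]; split; first exact: gen_tr.
move=> Y1 Y2 g1 g2 s1 s2.
have hgi : H (inv g) by exact: (subV hH.1 hg).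
have t1 : forall x, tr (inv g) Y1 x -> X x.
  by move=> x h; rewrite -(tr_inv g X); exact: (s1 _ h).
have t2 : forall x, tr (inv g) Y2 x -> X x.
  by move=> x h; rewrite -(tr_inv g X); exact: (s2 _ h).
have [x [a b]] := iX _ _ (gen_tr hgi g1) (gen_tr hgi g2) t1 t2.
by exists (inv (inv g) ** x).
Qed.

Section Stab.
Variable X0 : G -> Prop.
Hypothesis iX0 : indec X0.

Definition RR (g y : G) := X0 (inv g ** y) /\ X0 y.

Lemma def_X0 : definable X0. Proof. exact: iX0.1.1. Qed.

Lemma def2_RR : def2 RR.
Proof. apply: D_and; [apply: (tdef_comp def_X0); tdt | exact: (D_at _ def_X0)]. Qed.

Lemma def_RR g : definable (RR g).
Proof. apply: D_and; [exact: def_ltr def_X0 | exact: def_X0]. Qed.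

Definition SS g := H g /\ ((exists y, RR g y) /\ rk1 (RR g) = rho).

Lemma def_SS : definable SS.
Proof. apply: D_and; [exact: hH.2 | exact: (rk1_definable rho def2_RR)]. Qed.

Lemma SS_iff g : SS g <-> H g /\ gen (RR g).
Proof.
split.
  move=> [hg [ne e]]; split=> //; split; first exact: def_RR.
  split=> //; split; last by rewrite e.
  by move=> y [_ x0]; exact: iX0.1.2.2.1.
move=> [hg gR]; split=> //; split; first exact: gR.2.1.
exact: gen_rk.
Qed.

Lemma SS_sub : dsub SS.
Proof.
have X0H := iX0.1.2.2.1.
split; last exact: def_SS.
split.
  apply/SS_iff; split; first exact: (sub1 hH.1).
  by apply: (gen_ext iX0.1) => y; rewrite /RR inv1' mul1g'; split; [move=> h; split|case].
split.
  move=> g h /SS_iff [hg gg] /SS_iff [hh gh]; apply/SS_iff.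
  have hgh : H (g ** h) by exact: (subM hH.1 hg hh).
  split=> //.
  have m := indec_meet (indec_tr hg iX0) (gen_tr hg gh) gg
    (fun y a => proj2 a) (fun y a => proj1 a).
  apply: (gen_sup m (def_RR _)); last by move=> y [_ x0]; exact: X0H.
  move=> y [[a b] [c d]]; split=> //; move: a; rewrite /tr invMg' mulgA' //.
move=> g /SS_iff [hg gg]; apply/SS_iff.
have hgi : H (inv g) by exact: (subV hH.1 hg).
split=> //; apply: (gen_ext (gen_tr hgi gg)) => y.
by rewrite /tr /RR invgK' mulKg'; split; case.
Qed.

Lemma SS_all g : H g -> SS g.
Proof.
have X0H := iX0.1.2.2.1.
have [sS dS] := SS_sub.
move=> hg.
have sub' : forall x, SS x -> H x by move=> x [].
suff e : rk1 SS = rho by exact: (conn SS_sub sub' e hg).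
have fi : finite_index SS H.
  apply: NNPP => nfi.
  have step : forall s : list G, exists x, H x /\ forall c, In c s -> ~ SS (x ** inv c).
    move=> s; apply: NNPP => n; apply: nfi; exists s => x hx; apply: NNPP => nc.
    apply: n; exists x; split=> // c ic kc; apply: nc; by exists c.
  have [f [fP fR]] := @avoid_seq G H (fun x c => ~ SS (x ** inv c)) (inhabits one) step.
  pose T i := tr (inv (f i)) X0.
  have gT : forall i, gen (T i) by move=> i; apply: gen_tr iX0.1; exact: (subV hH.1 (fP i)).
  have dT : forall i, definable (T i) by move=> i; exact: (gT i).1.
  have pair : forall i j, i < j -> ~ gen (fun y => T j y /\ T i y).
    move=> i j lt gp; apply: (fR _ _ lt).
    have hi : H (f i ** inv (f j)) by apply: (subM hH.1 (fP i)); exact: (subV hH.1 (fP j)).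
    have : SS (f i ** inv (f j)).
      apply/SS_iff; split=> //.
      apply: (gen_ext (gen_tr (fP i) gp)) => y.
      by rewrite /T /tr /RR !invgK' mulKVg' invMg' invgK' -mulgA'.
    by move/(subV sS); rewrite invMg' invgK'.
  pose D j := fun y => T j y /\ ~ bigU1 (List.map T (List.seq 0 j)) y.
  have dD : forall j, definable (D j).
    move=> j; apply: D_and; first exact: (dT j).
    have hb : definable (bigU1 (List.map T (List.seq 0 j))).
      by apply: def_bigU1 => A; rewrite in_map_iff => -[i [<- _]].
    exact: (D_not hb).
  apply: (no_inf (Q := D)).
    move=> j.
    pose l := D j :: List.map (fun i => fun y => T j y /\ T i y) (List.seq 0 j).
    have hl : forall B, In B l -> definable B.
      move=> B iB0; case: (in_inv iB0) => [<-|iB]; first exact: dD.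
      by move: iB; rewrite in_map_iff => -[i [<- _]]; apply: D_and; [exact: (dT j)|exact: (dT i)].
    have cov : forall y, T j y -> exists B, In B l /\ B y.
      move=> y ty; case: (classic (bigU1 (List.map T (List.seq 0 j)) y)) => [[A [iA ay]]|nb].
        move: iA; rewrite in_map_iff => -[i [eA ii]]; subst A.
        exists (fun y => T j y /\ T i y); split; last by split.
        by right; rewrite in_map_iff; exists i.
      by exists (D j); split; [left|split].
    have [B [iB [ne r]]] := rk1_union_list (dT j) hl cov (gT j).2.1 (gT j).2.2.2.
    case: (in_inv iB) => [eB|iB'].
      subst B; split=> //; split=> //; split=> // y [ty _]; exact: (gT j).2.2.1.
    move: iB'; rewrite in_map_iff => -[i [eB ii]]; subst B; exfalso.
    apply: (pair i j); first by move: ii; rewrite in_seq0.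
    split; first by apply: D_and; [exact: (dT j)|exact: (dT i)].
    by split=> //; split=> // y [ty _]; exact: (gT j).2.2.1.
  have disj : forall k l x, k < l -> D k x -> D l x -> False.
    move=> k l x lt [tk _] [_ nb]; apply: nb; exists (T k); split=> //.
    by rewrite in_map_iff; exists k; split=> //; rewrite in_seq0.
  move=> k l x ne a b; case: (ltngtP k l) => [lt|lt|e] //.
    exact: disj lt a b.
  exact: disj lt b a.
apply/eqP; rewrite eqn_leq (rk_of_fi SS_sub hH fi) andbT.
apply: rk1_mono => //; [exact: hH.2 | by exists one; exact: (sub1 sS)].
Qed.

End Stab.

Lemma lt_le_pred a b : a < b -> a <= b.-1.
Proof. by move=> lt; rewrite -ltnS (ltn_predK lt). Qed.

Lemma gen_hit X0 Y : indec X0 -> gen Y -> exists g, H g /\ gen (fun y => tr g X0 y /\ Y y).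
Proof.
move=> iX0 gY; apply: NNPP => nh.
have X0H := iX0.1.2.2.1.
have dX0 := iX0.1.1.
have [z0 z0X] := iX0.1.2.1.
have [y0 y0Y] := gY.2.1.
pose Z g x := H g /\ Y x /\ X0 (inv g ** x).
have dZ : def2 Z.
  apply: D_and; first exact: (D_at _ hH.2).
  apply: D_and; first exact: (D_at _ gY.1).
  by apply: (tdef_comp dX0); tdt.
have hy0 : H y0 by exact: gY.2.2.1.
have hz0 : H z0 by exact: X0H.
have Z0 : Z (y0 ** inv z0) y0.
  split; first by apply: (subM hH.1 hy0); exact: (subV hH.1 hz0).
  by split=> //; rewrite invMg' invgK' mulgKV'.
have neZ : exists g x, Z g x by exists (y0 ** inv z0), y0.
have E1 : rk2 Z = rk1 Y + rk1 X0.
  rewrite -(rk2_swap dZ neZ).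
  rewrite (rk2_add (k := rk1 X0) (def2_swap dZ) (ex_intro _ y0 (ex_intro _ (y0 ** inv z0) Z0))).
    congr (_ + _); apply: rk1_ext => x; split; first by case=> g [_ []].
    move=> yx; have hx : H x by exact: gY.2.2.1.
    exists (x ** inv z0); split; first by apply: (subM hH.1 hx); exact: (subV hH.1 hz0).
    by split=> //; rewrite invMg' invgK' mulgKV'.
  move=> x [g [hg [yx xg]]].
  have hx : H x by exact: gY.2.2.1.
  rewrite (rk1_ext (Q := fun g => X0 (inv g ** x))); last first.
    move=> h; split; first by case=> _ [].
    move=> xh; split; last by split.
    have hih : H (inv h) by rewrite -(mulgK' x (inv h)); apply: (subM hH.1 (X0H _ xh)); exact: (subV hH.1 hx).
    exact: (subVr hH.1 hih).
  apply: (@rk_comp_bij _ _ _ (fun z => x ** inv z)) => //.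
  - by move=> n i; tdt.
  - by move=> w; rewrite invMg' invgK' mulKVg'.
  - by move=> w; rewrite invMg' invgK' mulgKV'.
  - by exists z0.
have fibsmall : forall g x, Z g x -> rk1 (Z g) < rho.
  move=> g x Zgx; have hg := Zgx.1.
  have dZg : definable (Z g).
    apply: D_and; first exact: D_cst.
    apply: D_and; [exact: gY.1 | exact: def_ltr].
  rewrite ltnNge; apply/negP => le; apply: nh; exists g; split=> //.
  apply: (gen_ext (X := Z g)); last by move=> y; split; [case=> _ [a b]; split | case=> a b; split].
  by split=> //; split; [exists x | split => // y [_ [yy _]]; exact: gY.2.2.1].
have rpos : 0 < rho.
  by have := fibsmall _ _ Z0; apply: leq_trans.
have E2 := rk2_fib_le (b := rho.-1) dZ neZ (fun g x z => (lt_le_pred (fibsmall g x z))).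
have dom : rk1 (fun g => exists x, Z g x) <= rho.
  apply: rk1_mono; [exact: def2_proj dZ | exact: hH.2 | by exists (y0 ** inv z0), y0 | by move=> g [x []]].
rewrite E1 (gen_rk gY) (gen_rk iX0.1) in E2.
have lt : rho + rho.-1 < rho + rho by rewrite ltn_add2l ltn_predL.
have := leq_trans E2 (leq_add dom (leqnn rho.-1)).
by move=> le; have := leq_ltn_trans le lt; rewrite ltnn.
Qed.

Lemma gen_meet X Y : gen X -> gen Y -> exists x, X x /\ Y x.
Proof.
move=> gX gY.
have [X0 iX0] := exists_indec.
have [g [hg gg]] := gen_hit iX0 gX.
have [h [hh gh]] := gen_hit iX0 gY.
have hgh : H (inv g ** h) by apply: (subM hH.1 _ hh); exact: (subV hH.1 hg).
have [_ gR] := (SS_iff iX0 _).1 (SS_all iX0 hgh).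
have g2 : gen (fun y => tr g X0 y /\ tr h X0 y).
  apply: (gen_ext (gen_tr hg gR)) => y.
  by rewrite /tr /RR invMg' invgK' mulgA' mulgK'; split; case=> a b; split.
have m1 := indec_meet (indec_tr hg iX0) gg g2 (fun y a => proj1 a) (fun y a => proj1 a).
have m2 := indec_meet (indec_tr hh iX0) m1 gh (fun y a => proj2 (proj2 a)) (fun y a => proj1 a).
have [x [[[_ xX] _] [_ yY]]] := m2.2.1.
by exists x.
Qed.

End Connected.

Lemma fin_surj_inj (T : Type) (f : T -> T) (a b : T) :
  finite_set (fun _ : T => True) -> (forall y, exists x, f x = y) -> f a = f b -> a <> b -> False.
Proof.
move=> [L hL] surj fab ne.
have dec : forall x y : T, {x = y} + {x <> y} by move=> x y; apply: excluded_middle_informative.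
pose L' := nodup dec L.
have inL : forall x, In x L' by move=> x; apply/nodup_In; exact: hL.
pose g y := epsilon (inhabits a) (fun x => f x = y).
have fg : forall y, f (g y) = y by move=> y; exact: (epsilon_spec _ _ (surj y)).
have ginj : Injective g by move=> y y' e; rewrite -(fg y) -(fg y') e.
have [c [cab cne]] : exists c, (c = a \/ c = b) /\ c <> g (f a).
  case: (classic (a = g (f a))) => e; last by exists a; split=> //; left.
  by exists b; split; [right | move=> e'; apply: ne; rewrite e e'].
have cni : ~ In c (List.map g L').
  rewrite in_map_iff => -[y [e _]]; apply: cne.
  have fc : f c = f a by case: cab => ->.
  have ey : y = f a by rewrite -fc -e fg.
  by rewrite -e ey.
have nd : NoDup (c :: List.map g L').
  by apply: NoDup_cons => //; apply: Injective_map_NoDup => //; exact: NoDup_nodup.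
have := NoDup_incl_length nd (fun x _ => inL x); rewrite /= length_map.
by move/leP; rewrite ltnn.
Qed.

Section Frob.
Variable G : fMR_group.
Local Notation "x ** y" := (gmul x y) (at level 40, left associativity).
Local Notation one := (gone G).
Local Notation inv := (@ginv G).
Local Notation Df := (@Def G).

Lemma finite_cover (B : G -> Prop) : finite_set (fun _ : G => True) -> is_subgroup B ->
  (forall x, exists g, conj_set B g x) -> proper_subset B -> False.
Proof.
move=> fin sB cB [z nz].
pose rep x := epsilon (inhabits one) (fun t => B (x ** inv t)).
have repP : forall x, B (x ** inv (rep x)).
  move=> x; apply: (epsilon_spec (inhabits one) (fun t => B (x ** inv t))).
  by exists x; rewrite mulgV'; exact: sub1.
have rep_eq : forall x y, B (x ** inv y) -> rep x = rep y.
  move=> x y bxy; rewrite /rep; congr (epsilon _ _); apply: pred_ext => t; split=> h.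
    have -> : y ** inv t = inv (x ** inv y) ** (x ** inv t) by rewrite inv_mulV.
    by apply: (subM sB _ h); exact: (subV sB bxy).
  have -> : x ** inv t = (x ** inv y) ** (y ** inv t) by rewrite -mulgA' mulKg'.
  exact: (subM sB bxy h).
have repK : forall x, rep (rep x) = rep x.
  move=> x; apply: rep_eq.
  by have := subV sB (repP x); rewrite invMg' invgK'.
pose phi x := inv (rep x) ** x.
apply: (fin_surj_inj (f := phi) (a := rep one) (b := rep z) fin).
- move=> y; have [g bg] := cB y.
  pose t := rep g.
  have Bt : B (t ** inv g).
    by have := subV sB (repP g); rewrite invMg' invgK'.
  exists (t ** y); rewrite /phi.
  have -> : rep (t ** y) = t.
    transitivity (rep t); last by rewrite /t repK.
    apply: rep_eq.
    have -> : t ** y ** inv t = (t ** inv g) ** (g ** y ** inv g) ** inv (t ** inv g).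
      by rewrite invMg' invgK' !mulgA' !mulgKV'.
    apply: (subM sB); first exact: (subM sB Bt bg).
    exact: (subV sB Bt).
  by rewrite mulKg'.
- rewrite /phi !repK; have e1 : rep one ** inv (rep one) = one by rewrite mulgV'.
  by rewrite !mulVg'.
- move=> e.
  have b1 : B (rep one) by have := subV sB (repP one); rewrite invMg' invgK' inv1' mulg1'.
  apply: nz; have := repP z; rewrite -e => bz.
  by rewrite -(mulgKV' (rep one) z); exact: (subM sB bz b1).
Qed.

End Frob.

Section Frob2.
Variable G : fMR_group.
Local Notation "x ** y" := (gmul x y) (at level 40, left associativity).
Local Notation one := (gone G).
Local Notation inv := (@ginv G).
Local Notation Df := (@Def G).

Lemma malK (M : G -> Prop) (x h : G) : malnormal M -> M x -> x <> one ->
  M (h ** x ** inv h) -> M h.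
Proof. by move=> mM mx nx mh; apply: NNPP => nh; apply: nx; exact: (mM h nh x mx mh). Qed.

Lemma conj_sub (M : G -> Prop) c : is_subgroup M -> is_subgroup (conj_set M c).
Proof.
move=> sM; rewrite /conj_set; split; first by rewrite mulg1' mulgV'; exact: sub1.
split.
  move=> x y a b.
  have -> : c ** (x ** y) ** inv c = (c ** x ** inv c) ** (c ** y ** inv c).
    by rewrite !mulgA' mulgKV'.
  exact: (subM sM a b).
move=> x a.
have -> : c ** inv x ** inv c = inv (c ** x ** inv c) by rewrite !invMg' invgK' mulgA'.
exact: (subV sM a).
Qed.

Lemma conj_maln (M : G -> Prop) c : malnormal M -> malnormal (conj_set M c).
Proof.
move=> mM h nh x mx mhx.
have e : c ** (h ** x ** inv h) ** inv c =
   (c ** h ** inv c) ** (c ** x ** inv c) ** inv (c ** h ** inv c).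
  by rewrite !invMg' !invgK' !mulgA' !mulgKV'.
rewrite /conj_set e in mhx.
have := mM _ nh _ mx mhx.
move=> e1; have -> : x = inv c ** (c ** x ** inv c) ** c by rewrite !mulgA' mulVg' mul1g' mulgKV'.
by rewrite e1 mulg1' mulVg'.
Qed.

Lemma conj_conj (P : G -> Prop) g h x : conj_set (conj_set P g) h x = conj_set P (g ** h) x.
Proof. by rewrite /conj_set invMg' !mulgA'. Qed.

Section Union.
Variables (M K D : G -> Prop).
Hypotheses (sM : is_subgroup M) (dM : definable M) (mM : malnormal M).
Hypotheses (hK : dsub K) (dD : definable D) (neD : exists x, D x).
Hypotheses (DM : forall x, D x -> M x) (DK : forall x, D x -> K x) (D1 : ~ D one).

Definition UU y := exists g, K g /\ D (g ** y ** inv g).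

Lemma def2_W : def2 (fun g y => K g /\ D (g ** y ** inv g)).
Proof. apply: D_and; [exact: (D_at _ hK.2) | by apply: (tdef_comp dD); tdt]. Qed.

Lemma def_UU : definable UU.
Proof. exact: (def2_proj2 def2_W). Qed.

Lemma UU_sub y : UU y -> K y.
Proof.
case=> g [kg dy].
have ky := DK dy.
have -> : y = inv g ** (g ** y ** inv g) ** g by rewrite !mulgA' mulVg' mul1g' mulgKV'.
apply: (subM hK.1) => //; exact: (subM hK.1 (subV hK.1 kg) ky).
Qed.

Lemma UU_ne : exists y, UU y.
Proof.
case: neD => d dd; exists d; exists one; split; first exact: (sub1 hK.1).
by rewrite mul1g' inv1' mulg1'.
Qed.

Lemma UU_rank : rk1 K + rk1 D <= rk1 UU + rk1 (fun x => M x /\ K x).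
Proof.
have [d dd] := neD.
have neW : exists g y, K g /\ D (g ** y ** inv g).
  by exists one, d; split; [exact: (sub1 hK.1) | rewrite mul1g' inv1' mulg1'].
have E1 : rk2 (fun g y => K g /\ D (g ** y ** inv g)) = rk1 K + rk1 D.
  rewrite (rk2_add (k := rk1 D) def2_W neW).
    congr (_ + _); apply: rk1_ext => g; split; first by case=> y [].
    move=> kg; exists (inv g ** d ** g); split=> //.
    by rewrite !mulgA' mulgV' mul1g' mulgK'.
  move=> g [y [kg _]].
  rewrite (rk1_ext (Q := conj_set D g)); last by move=> y'; split; [case|].
  by apply: rk_conj => //; exists d.
have hMK : dsub (fun x => M x /\ K x) by apply: dsubI => //; split.
have W0 : K one /\ D (one ** d ** inv one).
  by split; [exact: (sub1 hK.1) | rewrite mul1g' inv1' mulg1'].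
have fb : forall y g0, K g0 /\ D (g0 ** y ** inv g0) ->
   rk1 (fun g => K g /\ D (g ** y ** inv g)) <= rk1 (fun x => M x /\ K x).
  move=> y g0 [kg0 dg0].
  have dF : definable (fun g => K g /\ D (g ** y ** inv g)).
    by apply: D_and; [exact: hK.2 | by apply: (tdef_comp dD); tdt].
  rewrite -(rk_rcoset g0 hMK.2 (ex_intro _ one (conj (sub1 sM) (sub1 hK.1)))).
  apply: rk1_mono => //; first exact: def_rcoset hMK.2.
    by exists g0.
  move=> g [kg dg]; rewrite /rcoset.
  have kh : K (g ** inv g0) by apply: (subM hK.1 kg); exact: (subV hK.1 kg0).
  split=> //.
  have x1 : g0 ** y ** inv g0 <> one by move=> e; apply: D1; rewrite -e.
  apply: (malK mM (DM dg0) x1).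
  have -> : g ** inv g0 ** (g0 ** y ** inv g0) ** inv (g ** inv g0) = g ** y ** inv g.
    by rewrite invMg' invgK' !mulgA' !mulgKV'.
  exact: (DM dg).
have E2 := rk2_fib_le (b := rk1 (fun x => M x /\ K x)) (def2_swap def2_W)
  (ex_intro _ d (ex_intro _ one W0)) fb.
rewrite rk2_swap // in E2; last exact: def2_W.
by rewrite -E1.
Qed.

End Union.

Fixpoint pw (x : G) (n : nat) : G := if n is n'.+1 then x ** pw x n' else one.

Lemma pw_add x m n : pw x (m + n) = pw x m ** pw x n.
Proof. by elim: m => [|m IH] /=; [rewrite mul1g' | rewrite IH mulgA']. Qed.

Lemma pw_conj g x n : pw (g ** x ** inv g) n = g ** pw x n ** inv g.
Proof.
elim: n => [|n IH] /=; first by rewrite mulg1' mulgV'.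
by rewrite IH !mulgA' mulgKV'.
Qed.

Lemma pw_sub (H : G -> Prop) x n : is_subgroup H -> H x -> H (pw x n).
Proof. by move=> sH hx; elim: n => [|n IH] /=; [exact: sub1 | exact: subM]. Qed.

Lemma pw_comm x y n : x ** y = y ** x -> pw x n ** y = y ** pw x n.
Proof.
move=> c; elim: n => [|n IH] /=; first by rewrite mul1g' mulg1'.
by rewrite -mulgA' IH mulgA' c -mulgA'.
Qed.

Lemma pw_mul x m n : pw x (m * n) = pw (pw x m) n.
Proof.
elim: n => [|n IH]; first by rewrite muln0.
by rewrite mulnS pw_add IH.
Qed.

Lemma pw1 x : pw x 1 = x. Proof. by rewrite /= mulg1'. Qed.

End Frob2.

Section Part1.
Variable G : fMR_group.
Local Notation "x ** y" := (gmul x y) (at level 40, left associativity).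
Local Notation one := (gone G).
Local Notation inv := (@ginv G).
Local Notation Df := (@Def G).

Lemma conj_eq1 (g z : G) : g ** z ** inv g = one -> z = one.
Proof.
move=> e; have -> : z = inv g ** (g ** z ** inv g) ** g by rewrite !mulgA' mulVg' mul1g' mulgKV'.
by rewrite e mulg1' mulVg'.
Qed.

Lemma sq1_inv (w : G) : pw w 2 = one -> w = inv w.
Proof. by rewrite /= mulg1' => e; exact: mulg_eq1 e. Qed.

Variable B : G -> Prop.
Hypotheses (sB : is_subgroup B) (dB : definable B) (mB : malnormal B).
Hypotheses (cB : forall x, exists g, conj_set B g x) (pB : proper_subset B).

Lemma dsubT : dsub (fun _ : G => True).
Proof. by split; [split; [done | split; done] | exact: D_true]. Qed.

Lemma part1 : infinite_set B.
Proof.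
move=> [sBl hsB].
case: (classic (finite_set (fun _ : G => True))) => finG.
  exact: (finite_cover finG sB cB pB).
have rT : 1 <= rk1 (fun _ : G => True) := rk1_infinite (@D_true G 1) finG.
have [G0 [[hG0 [_ eG0]] minG0]] := exists_min dsubT.
have conn0 : forall K, dsub K -> (forall x, K x -> G0 x) -> rk1 K = rk1 G0 -> forall x, G0 x -> K x.
  by move=> K hK KG e; apply: minG0 => //; rewrite e.
have sG0 := hG0.1.
have dG0 := hG0.2.
have centfin : forall x, x <> one -> exists l, forall c, c ** x = x ** c -> In c l.
  move=> x nx; have [h bh] := cB x.
  exists (List.map (fun b => inv h ** b ** h) sBl) => c cx.
  apply/in_map_iff; exists (h ** c ** inv h); split.
    by rewrite !mulgA' mulVg' mul1g' mulgKV'.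
  apply: hsB; apply: (malK mB bh).
    by move/conj_eq1.
  have -> : h ** c ** inv h ** (h ** x ** inv h) ** inv (h ** c ** inv h) = h ** x ** inv h.
    rewrite !invMg' invgK' !mulgA' !mulgKV' -(mulgA' h c x) cx !mulgA' mulgK' //.
  exact: bh.
have clgen : forall x, G0 x -> x <> one -> gen G0 (fun y => exists g, G0 g /\ y = g ** x ** inv g).
  move=> x gx nx.
  pose Ga g y := G0 g /\ y = g ** x ** inv g.
  have dGa : def2 Ga.
    apply: D_and; first exact: (D_at _ dG0).
    by apply: tdef_eq; tdt.
  have ne : exists g y, Ga g y by exists one, x; split; [exact: sub1 | rewrite mul1g' inv1' mulg1'].
  have E1 : rk2 Ga = rk1 G0 + 0.
    rewrite (rk2_add (k := 0) dGa ne).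
      by congr (_ + _); apply: rk1_ext => g; split; [case=> y [] | move=> gg; exists (g ** x ** inv g)].
    move=> g [y [gg _]]; rewrite (rk1_ext (Q := fun y => y = g ** x ** inv g)); last by move=> y'; split; [case|].
    apply: rk1_finite; [exact: def_single | by exists (g ** x ** inv g) | by exists (g ** x ** inv g :: nil) => y' ->; left].
  have E2 : rk2 (fun y g => Ga g y) = rk1 (fun y => exists g, G0 g /\ y = g ** x ** inv g) + 0.
    have [y0 [g0 G0y]] : exists y g, Ga g y by case: ne => g [y r]; exists y, g.
    rewrite (rk2_add (k := 0) (def2_swap dGa) (ex_intro _ y0 (ex_intro _ g0 G0y))) //.
    move=> y [g1 [gg1 e1]].
    have dF : definable (fun g => Ga g y).
      apply: D_and; first exact: dG0.
      by apply: tdef_eq; tdt.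
    apply: rk1_finite => //; first by exists g1.
    have [l hl] := centfin x nx.
    exists (List.map (fun c => g1 ** c) l) => g [gg e].
    apply/in_map_iff; exists (inv g1 ** g); split; first by rewrite mulKVg'.
    apply: hl.
    have e' : inv g1 ** g ** x ** inv (inv g1 ** g) = x.
      have -> : inv g1 ** g ** x ** inv (inv g1 ** g) = inv g1 ** (g ** x ** inv g) ** g1.
        by rewrite invMg' invgK' !mulgA'.
      by rewrite -e e1 !mulgA' mulVg' mul1g' mulgKV'.
    by rewrite -{2}e' mulgKV'.
  rewrite rk2_swap // E1 in E2.
  rewrite /gen; split; first by have hh := def2_proj2 dGa; exact hh.
  split; first by exists x, one; split; [exact: sub1 | rewrite mul1g' inv1' mulg1'].
  split; first by move=> y [g [gg ->]]; apply: (subM sG0); [exact: (subM sG0 gg gx) | exact: (subV sG0 gg)].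
  by move: E2; rewrite !addn0 => ->.
have conjall : forall x y, G0 x -> x <> one -> G0 y -> y <> one ->
    exists g, G0 g /\ y = g ** x ** inv g.
  move=> x y gx nx gy ny.
  have [z [[g [gg ez]] [h [gh ez']]]] := gen_meet hG0 conn0 (clgen x gx nx) (clgen y gy ny).
  exists (inv h ** g); split; first by apply: (subM sG0 (subV sG0 gh) gg).
  have -> : inv h ** g ** x ** inv (inv h ** g) = inv h ** (g ** x ** inv g) ** h.
    by rewrite invMg' invgK' !mulgA'.
  by rewrite -ez ez' !mulgA' mulVg' mul1g' mulgKV'.
have tors : forall x, exists n, 0 < n /\ pw x n = one.
  move=> x; have [h bh] := cB x.
  have [k [l [ne e]]] := pigeon (s := sBl) (f := fun k => pw (h ** x ** inv h) k)
    (fun k => hsB _ (pw_sub k sB bh)).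
  have key : forall k l, k < l -> pw (h ** x ** inv h) k = pw (h ** x ** inv h) l ->
       exists n, 0 < n /\ pw x n = one.
    move=> k' l' lt e'; exists (l' - k'); split; first by rewrite subn_gt0.
    move: e'; rewrite -{1}(subnK (ltnW lt)) pw_add => e'.
    have e2 : pw (h ** x ** inv h) (l' - k') = one.
      by apply: (@mulg_injr _ (pw (h ** x ** inv h) k')); rewrite mul1g' -e'.
    by move: e2; rewrite pw_conj => /conj_eq1.
  by case: (ltngtP k l) => [lt|lt|e'] //; [exact: key lt e | exact: key lt (esym e)].
have rG0 : 1 <= rk1 G0 by rewrite eG0.
have [[x0 [gx0 nx0]] _] := rk_remove one dG0 (ex_intro _ one (sub1 sG0)) rG0.
have [n [[n0 xn] nmin]] := min_exists (tors x0).
have n1 : n != 1 by apply/eqP => e; move: xn; rewrite e pw1.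
have n2 : 1 < n by rewrite ltn_neqAle eq_sym n1 n0.
have same : forall y k, G0 y -> y <> one -> pw y k = one -> pw x0 k = one.
  move=> y k gy ny e; have [g [gg ->]] := conjall y x0 gy ny gx0 nx0.
  by rewrite pw_conj e mulg1' mulgV'.
have same' : forall y k, G0 y -> y <> one -> pw x0 k = one -> pw y k = one.
  move=> y k gy ny e; have [g [gg ->]] := conjall x0 y gx0 nx0 gy ny.
  by rewrite pw_conj e mulg1' mulgV'.
have no2 : pw x0 2 <> one.
  move=> e; have := nmin 2 (conj isT e) => le2.
  have en : n = 2 by apply/eqP; rewrite eqn_leq le2 n2.
  (* G0 is abelian, so G0 centralizes x0 *)
  have sq : forall y, G0 y -> pw y 2 = one.
    move=> y gy; case: (classic (y = one)) => [->|ny]; first by rewrite /= !mul1g'.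
    exact: same' gy ny e.
  have ab : forall y z, G0 y -> G0 z -> y ** z = z ** y.
    move=> y z gy gz.
    rewrite (sq1_inv (sq _ (subM sG0 gy gz))) invMg' -(sq1_inv (sq _ gy)) -(sq1_inv (sq _ gz)) //.
  have [l hl] := centfin x0 nx0.
  have : rk1 G0 = 0.
    apply: rk1_finite => //; first by exists one; exact: sub1.
    by exists l => c gc; apply: hl; exact: ab gc gx0.
  by rewrite eG0 => e0; rewrite e0 in rT.
case: (boolP (odd n)) => [on|en].
  have gi : G0 (inv x0) by exact: subV.
  have ni : inv x0 <> one by move=> e; apply: nx0; rewrite -(invgK' x0) e inv1'.
  have [g [gg eg]] := conjall x0 (inv x0) gx0 nx0 gi ni.
  have ng : g <> one.
    move=> e; apply: no2; rewrite /= mulg1'.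
    by rewrite {2}(_ : x0 = inv x0) ?mulgV' // eg e mul1g' inv1' mulg1'.
  have gn : pw g n = one by exact: same' gg ng xn.
  have hx : (g ** g) ** x0 ** inv (g ** g) = x0.
    have -> : g ** g ** x0 ** inv (g ** g) = g ** (g ** x0 ** inv g) ** inv g.
      by rewrite invMg' !mulgA'.
    rewrite -eg.
    have -> : g ** inv x0 ** inv g = inv (g ** x0 ** inv g) by rewrite !invMg' invgK' mulgA'.
    by rewrite -eg invgK'.
  have cx : (g ** g) ** x0 = x0 ** (g ** g) by rewrite -{2}hx mulgKV'.
  have pw2 : forall w : G, pw w 2 = w ** w by move=> w; rewrite /= mulg1'.
  have gpw : g = pw (g ** g) (n./2).+1.
    have e2 : n.+1 = 2 * (n./2).+1 by have := odd_double_half n; rewrite on; lia.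
    have : pw g n.+1 = g by rewrite /= gn mulg1'.
    by rewrite e2 pw_mul pw2 => ->.
  have gc : g ** x0 = x0 ** g by rewrite gpw; exact: pw_comm.
  apply: no2; rewrite pw2.
  have ex : inv x0 = x0 by rewrite eg gc mulgK'.
  by rewrite -{2}ex mulgV'.
have e2 : n = n./2 * 2 by have := odd_double_half n; rewrite (negbTE en) muln2 add0n => ->.
have m2 : 1 < n./2.
  rewrite ltnNge; apply/negP => le; apply: no2.
  have : n <= 2 by rewrite e2 -[2]/(1 * 2) leq_mul2r le orbT.
  move=> le2; have en2 : n = 2 by apply/eqP; rewrite eqn_leq le2 n2.
  by rewrite -en2.
have mlt : n./2 < n by rewrite {2}e2 -[X in X < _]muln1 ltn_mul2l ltnW.
have gy : G0 (pw x0 n./2) by exact: pw_sub.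
have ny : pw x0 n./2 <> one.
  move=> e; have := nmin _ (conj (ltnW m2) e); by rewrite leqNgt mlt.
apply: no2; apply: (same _ _ gy ny).
by rewrite -pw_mul -e2.
Qed.

End Part1.

Section Part23.
Variable G : fMR_group.
Local Notation "x ** y" := (gmul x y) (at level 40, left associativity).
Local Notation one := (gone G).
Local Notation inv := (@ginv G).
Local Notation Df := (@Def G).

Variable B : G -> Prop.
Hypotheses (sB : is_subgroup B) (dB : definable B) (mB : malnormal B).
Hypotheses (cB : forall x, exists g, conj_set B g x) (pB : proper_subset B).

Lemma dsubB : dsub B. Proof. by split. Qed.

Lemma rk1_le_ne (P Q : G -> Prop) : definable P -> definable Q -> (exists x, P x) ->
  (forall x, P x -> Q x) -> rk1 Q = 0 -> rk1 P = 0.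
Proof. by move=> dP dQ ne s e; apply/eqP; rewrite -leqn0 -e; apply: rk1_mono. Qed.

Lemma part2 : connected_group G -> connected_subgroup B.
Proof.
move=> cG K hK KB fiK x bx.
have eK : rk1 K = rk1 B by apply/(fi_iff hK dsubB KB).
have rB : 1 <= rk1 B := rk1_infinite dB (part1 sB mB cB pB).
have connT : forall S : G -> Prop, dsub S -> (forall x, S x -> True) -> rk1 S = rk1 (fun _ : G => True) ->
    forall x, True -> S x.
  move=> S hS sT e y ty.
  have cG' : forall K, definable_subgroup K -> (forall x, K x -> True) ->
     finite_index K (fun _ : G => True) -> forall x, True -> K x := cG.
  have fi : finite_index S (fun _ : G => True).
    by apply: (fi_of_rk hS (dsubT G)) => //; rewrite e.
  exact (cG' S hS (fun _ _ => I) fi y I).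
have [K0 [[hK0 [K0K eK0]] minK0]] := exists_min hK.
have K0B : forall y, K0 y -> B y by move=> y /K0K /KB.
have eK0B : rk1 K0 = rk1 B by rewrite eK0 eK.
have normK0 : forall b y, B b -> K0 y -> K0 (b ** y ** inv b).
  move=> b y hb ky.
  have hc : dsub (conj_set K0 b) by split; [exact: conj_sub hK0.1 | exact: def_conj hK0.2].
  have cB' : forall z, conj_set K0 b z -> B z.
    move=> z kz; have := K0B _ kz => bz.
    have -> : z = inv b ** (b ** z ** inv b) ** b by rewrite !mulgA' mulVg' mul1g' mulgKV'.
    by apply: (subM sB (subM sB (subV sB hb) bz) hb).
  have eI := rk_inter hK0 hc dsubB K0B cB' eK0B
    (eq_trans (rk_conj b hK0.2 (ex_intro _ one (sub1 hK0.1))) eK0B).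
  have := minK0 _ (dsubI hK0 hc) (fun z a => proj1 a) (eq_trans eI (esym eK)) y ky.
  by case.
apply: NNPP => nk.
have nk0 : ~ K0 x by move=> /K0K.
have neK0 : exists y, K0 y by exists one; exact: (sub1 hK0.1).
have rK0 : 1 <= rk1 K0 by rewrite eK0B.
have [[d1 [kd1 nd1]] eD1] := rk_remove one hK0.2 neK0 rK0.
pose D1 := fun y => K0 y /\ y <> one.
pose D2 := rcoset K0 x.
have dD1 : definable D1 by apply: D_and; [exact: hK0.2 | apply: D_not; exact: def_single].
have dD2 : definable D2 by exact: def_rcoset hK0.2.
have D1B : forall y, D1 y -> B y by move=> y [/K0B].
have D2B : forall y, D2 y -> B y.
  move=> y ky; rewrite -(mulgKV' x y); apply: (subM sB (K0B _ ky) bx).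
have D21 : ~ D2 one.
  move=> k1; apply: nk0; rewrite /D2 /rcoset mul1g' in k1.
  exact: (subVr hK0.1 k1).
have neD2 : exists y, D2 y by exists x; rewrite /D2 /rcoset mulgV'; exact: (sub1 hK0.1).
have eD2 : rk1 D2 = rk1 B by rewrite /D2 (rk_rcoset x hK0.2 neK0) eK0B.
have eBT : rk1 (fun y => B y /\ True) = rk1 B by apply: rk1_ext => y; tauto.
have genU : forall D, definable D -> (exists y, D y) -> (forall y, D y -> B y) -> ~ D one ->
    rk1 D = rk1 B -> gen (fun _ : G => True) (UU (fun _ : G => True) D).
  move=> D dD neD DB D1' eD.
  have := UU_rank sB dB mB (dsubT G) dD neD DB D1'.
  rewrite eD eBT leq_add2r => le.
  split; first exact: (def_UU (dsubT G) dD).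
  split; first exact: (UU_ne (dsubT G) neD).
  by split.
have [y [[g [_ [kz nz]]] [h [_ k2]]]] := gen_meet (dsubT G) connT
  (genU D1 dD1 (ex_intro _ d1 (conj kd1 nd1)) D1B (fun a => proj2 a erefl) (eq_trans eD1 eK0B))
  (genU D2 dD2 neD2 D2B D21 eD2).
have bk : B (h ** inv g).
  apply: (malK mB (K0B _ kz) nz).
  have -> : h ** inv g ** (g ** y ** inv g) ** inv (h ** inv g) = h ** y ** inv h.
    by rewrite invMg' invgK' !mulgA' !mulgKV'.
  exact: D2B.
have kk := normK0 _ _ bk kz.
have ee : h ** inv g ** (g ** y ** inv g) ** inv (h ** inv g) = h ** y ** inv h.
  by rewrite invMg' invgK' !mulgA' !mulgKV'.
rewrite ee in kk.
apply: nk0; apply: (subVr hK0.1).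
have -> : inv x = inv (h ** y ** inv h) ** (h ** y ** inv h ** inv x) by rewrite mulKg'.
apply: (subM hK0.1 (subV hK0.1 kk)); exact: k2.
Qed.


Lemma rk_eq_remove (P : G -> Prop) : definable P -> (exists x, P x /\ x <> one) ->
  rk1 (fun x => P x /\ x <> one) = rk1 P.
Proof.
move=> dP [x [px nx]].
have dP1 : definable (fun x => P x /\ x <> one) by apply: D_and => //; apply: D_not; exact: def_single.
case: (posnP (rk1 P)) => [e|pos].
  rewrite e; apply: (rk1_le_ne dP1 dP) => //; first by exists x.
  by move=> y [].
by case: (rk_remove one dP (ex_intro _ x px) pos).
Qed.

Lemma conj_cent (g1 g c : G) : (inv g1 ** g) ** c = c ** (inv g1 ** g) ->
  g ** c ** inv g = g1 ** c ** inv g1.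
Proof.
move=> e.
have [k [eg kc]] : exists k, g = g1 ** k /\ k ** c = c ** k by exists (inv g1 ** g); rewrite mulKVg'.
rewrite eg.
have kc' : k ** c ** inv k = c by rewrite kc mulgK'.
have -> : g1 ** k ** c ** inv (g1 ** k) = g1 ** (k ** c ** inv k) ** inv g1 by rewrite invMg' !mulgA'.
by rewrite kc'.
Qed.

Lemma part3 (N : G -> Prop) : nontrivial N -> definable N -> normal_subgroup N ->
  product_is_whole N B.
Proof.
move=> [n1 [hn1 nn1]] dN [sN nN].
have hN : dsub N by split.
have nN' : forall g y, N y -> N (g ** y ** inv g).
  by move=> g y ny; have := nN (inv g) y ny; rewrite invgK'.
case: (posnP (rk1 N)) => [e0|pos].
  exfalso.
  have [lN hlN] := rk1_zero_finite dN e0.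
  have [h bh] := cB n1.
  pose c := h ** n1 ** inv h.
  have nc : c <> one by move/conj_eq1.
  have ce : c = h ** n1 ** inv h by [].
  have bc : B c by [].
  clearbody c.
  pose C := fun g => g ** c = c ** g.
  have dC : definable C by apply: tdef_eq; tdt.
  have hC : dsub C.
    split=> //; split; first by rewrite /C mul1g' mulg1'.
    split.
      move=> a b ea eb; rewrite /C -mulgA' eb !mulgA' ea //.
    move=> a ea; rewrite /C.
    have -> : inv a ** c = inv a ** (c ** a) ** inv a by rewrite !mulgA' mulgK'.
    by rewrite -ea !mulgA' mulVg' mul1g'.
  have CB : forall g, C g -> B g.
    move=> g eg; apply: (malK mB bc nc).
    by rewrite /C in eg; rewrite eg mulgK'.
  have neC : exists g, C g by exists one; exact: (sub1 hC.1).
  pose Ga g y := True /\ y = g ** c ** inv g.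
  have dGa : def2 Ga by apply: D_and; [exact: D_true | apply: tdef_eq; tdt].
  have neGa : exists g y, Ga g y by exists one, c; split=> //; rewrite mul1g' inv1' mulg1'.
  have E1 : rk2 Ga = rk1 (fun _ : G => True) + 0.
    rewrite (rk2_add (k := 0) dGa neGa).
      by congr (_ + _); apply: rk1_ext => g; split=> // _; exists (g ** c ** inv g).
    move=> g _; rewrite (rk1_ext (Q := fun y => y = g ** c ** inv g)); last by move=> y; split; [case|].
    apply: rk1_finite; [exact: def_single | by exists (g ** c ** inv g) | by exists (g ** c ** inv g :: nil) => y ->; left].
  have E2 : rk2 (fun y g => Ga g y) = rk1 (fun y => exists g, Ga g y) + rk1 C.
    have Ga1 : Ga one c by split=> //; rewrite mul1g' inv1' mulg1'.
    rewrite (rk2_add (k := rk1 C) (def2_swap dGa) (ex_intro _ c (ex_intro _ one Ga1))) //.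
    move=> y [g1 [_ e1]].
    rewrite (rk1_ext (Q := fun g => C (inv g1 ** g))); first by apply: rk_ltr.
    move=> g; split.
      case=> _ e; rewrite /C.
      have e' : inv g1 ** g ** c ** inv (inv g1 ** g) = c.
        have -> : inv g1 ** g ** c ** inv (inv g1 ** g) = inv g1 ** (g ** c ** inv g) ** g1.
          by rewrite invMg' invgK' !mulgA'.
        by rewrite -e e1 !mulgA' mulVg' mul1g' mulgKV'.
      by rewrite -{2}e' mulgKV'.
    rewrite /C => ec; split=> //.
    by rewrite e1 (conj_cent ec).
  rewrite rk2_swap // E1 in E2.
  have fin_cl : rk1 (fun y => exists g, Ga g y) = 0.
    apply: rk1_finite; first exact: def2_proj2 dGa.
      by exists c, one; split=> //; rewrite mul1g' inv1' mulg1'.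
    exists (List.map (fun z => inv h ** z ** h) lN) => y [g [_ ->]].
    apply/in_map_iff; exists (h ** (g ** c ** inv g) ** inv h); split.
      by rewrite !mulgA' mulVg' mul1g' mulgKV'.
    apply: hlN.
    have -> : h ** (g ** c ** inv g) ** inv h = (h ** g ** h) ** n1 ** inv (h ** g ** h).
      by rewrite ce !invMg' !mulgA'.
    exact: nN'.
  rewrite fin_cl add0n addn0 in E2.
  have eB : rk1 B = rk1 (fun _ : G => True).
    apply/eqP; rewrite eqn_leq; apply/andP; split.
      by apply: rk1_mono => //; [exact: D_true | exists one; exact: sub1].
    by rewrite E2; apply: rk1_mono.
  have [G0 [[hG0 [_ eG0]] minG0]] := exists_min (dsubT G).
  have fullconj : forall z, forall y, G0 y -> conj_set B z y.
    move=> z; have hc : dsub (conj_set B z) by split; [exact: conj_sub | exact: def_conj].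
    have eI := rk_inter hG0 hc (dsubT G) (fun _ _ => I) (fun _ _ => I) eG0
      (eq_trans (rk_conj z dB (ex_intro _ one (sub1 sB))) eB).
    move=> y gy; have := minG0 _ (dsubI hG0 hc) (fun w a => proj1 a) eI y gy; by case.
  case: pB => z nz.
  have G01 : forall y, G0 y -> y = one.
    move=> y gy.
    have b1 : B y by have := fullconj one y gy; rewrite /conj_set mul1g' inv1' mulg1'.
    exact: (mB nz b1 (fullconj z y gy)).
  have : rk1 (fun _ : G => True) = 0.
    rewrite -eG0; apply: rk1_finite; [exact: hG0.2 | by exists one; exact: (sub1 hG0.1) | ].
    by exists (one :: nil) => y /G01 ->; left.
  move/(rk1_zero_finite (@D_true G 1)) => finG.
  exact: (finite_cover finG sB cB (ex_intro _ z nz)).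
have [N0 [[hN0 [N0N eN0]] minN0]] := exists_min hN.
have sN0 := hN0.1.
have dN0 := hN0.2.
have connN0 : forall K, dsub K -> (forall x, K x -> N0 x) -> rk1 K = rk1 N0 -> forall x, N0 x -> K x.
  by move=> K hK KN e; apply: minN0 => //; rewrite e eN0.
have normN0 : forall g y, N0 y -> N0 (g ** y ** inv g).
  move=> g y ny.
  have hc : dsub (conj_set N0 g) by split; [exact: conj_sub | exact: def_conj].
  have cN : forall z, conj_set N0 g z -> N z.
    move=> z kz; have := nN g _ (N0N _ kz).
    by rewrite !mulgA' mulVg' mul1g' mulgKV'.
  have eI := rk_inter hN0 hc hN N0N cN eN0 (eq_trans (rk_conj g dN0 (ex_intro _ one (sub1 sN0))) eN0).
  by have := minN0 _ (dsubI hN0 hc) (fun w a => proj1 a) eI y ny; case.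
have neN0 : exists y, N0 y by exists one; exact: sub1.
have rN0 : 1 <= rk1 N0 by rewrite eN0.
have [[n0 [gn0 nn0]] _] := rk_remove one dN0 neN0 rN0.
have [h0 bh0] := cB n0.
have c0N : N0 (h0 ** n0 ** inv h0) := normN0 _ _ gn0.
have nc0 : h0 ** n0 ** inv h0 <> one by move/conj_eq1.
move=> x; apply: NNPP => nx.
have genN : forall M : G -> Prop, is_subgroup M -> definable M -> malnormal M ->
    (exists y, (M y /\ N0 y) /\ y <> one) ->
    gen N0 (UU N0 (fun y => (M y /\ N0 y) /\ y <> one)).
  move=> M sM dM mM neD.
  have dMN : definable (fun y => M y /\ N0 y) by apply: D_and.
  have dD : definable (fun y => (M y /\ N0 y) /\ y <> one).
    by apply: D_and => //; apply: D_not; exact: def_single.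
  have neD' : exists y, (M y /\ N0 y) /\ y <> one := neD.
  have := UU_rank sM dM mM hN0 dD neD' (fun y a => proj1 (proj1 a)) (fun a => proj2 a erefl).
  rewrite (rk_eq_remove dMN neD) leq_add2r => le.
  split; first exact: (def_UU hN0 dD).
  split; first exact: (UU_ne hN0 neD').
  split=> //; move=> y; apply: (UU_sub hN0) => z a; exact: (proj2 (proj1 a)).
pose M2 := conj_set B (inv x).
have sM2 : is_subgroup M2 by exact: conj_sub.
have dM2 : definable M2 by exact: def_conj.
have mM2 : malnormal M2 by exact: conj_maln.
have ne1 : exists y, (B y /\ N0 y) /\ y <> one by exists (h0 ** n0 ** inv h0).
have ne2 : exists y, (M2 y /\ N0 y) /\ y <> one.
  exists (x ** (h0 ** n0 ** inv h0) ** inv x); split; last by move/conj_eq1.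
  split; last exact: normN0.
  by rewrite /M2 /conj_set invgK' !mulgA' mulVg' mul1g' mulgKV'.
have [y [[g [gg [[bz nz0] nz]]] [h [hh [[m2 _] _]]]]] :=
  gen_meet hN0 connN0 (genN B sB dB mB ne1) (genN M2 sM2 dM2 mM2 ne2).
have bk : B (inv x ** h ** inv g).
  apply: (malK mB bz nz).
  have -> : inv x ** h ** inv g ** (g ** y ** inv g) ** inv (inv x ** h ** inv g) =
      inv x ** (h ** y ** inv h) ** inv (inv x).
    by rewrite !invMg' !invgK' !mulgA' !mulgKV'.
  exact: m2.
apply: nx; exists (h ** inv g), (inv (inv x ** h ** inv g)); split.
  by apply: N0N; apply: (subM sN0 hh); exact: (subV sN0 gg).
split; first exact: (subV sB bk).
by rewrite !invMg' !invgK' !mulgA' mulgKV' mulgV' mul1g'.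
Qed.

End Part23.

Unset Implicit Arguments.

Theorem mainTheorem4 (G : fMR_group) (B : G -> Prop) :
  full_frobenius_with B ->
  [/\ infinite_set B,
      connected_group G -> connected_subgroup B
    & forall N : G -> Prop,
        nontrivial N -> definable N -> normal_subgroup N ->
        product_is_whole N B].
Proof.
move=> [[[sB dB] [mB cB]] pB]; split.
- exact: (part1 sB mB cB pB).
- exact: (part2 sB dB mB cB pB).
- move=> N; exact: (part3 sB dB mB cB pB).
Qed.
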